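(* Let $k_0,k_1,k_{-1},k_2,e_T$ be nonnegative real parameters and consider the planar system \[ \dot s = k_0-k_1(e_T-c)s+k_{-1}c,\qquad \dot c = k_1(e_T-c)s-(k_{-1}+k_2)c . \] Then: (a) The system has infinitely many stationary points in $\mathbb{R}^2$ if and only if one of the following holds: $k_0=k_1=0$; $k_0=e_T=0$; $k_0=k_2=0$. (b) If the number of stationary points in $\mathbb{R}^2$ is finite, then it is $0$ or $1$. There is exactly one stationary point if and only if $k_1\neq 0$, $k_2\neq 0$ and $k_2e_T-k_0\neq 0$; in that case the stationary point is \[ P_0=(\widehat s,\widehat c)=\left(\frac{(k_{-1}+k_2)k_0}{k_1(k_2e_T-k_0)},\ \frac{k_0}{k_2}\right). \] This point lies in the first quadrant if and only if $k_2e_T-k_0>0$, in which case it is an attracting node; it lies in the second quadrant if and only if $k_2e_T-k_0<0$, in which case it is a saddle point. (c) The first quadrant is positively invariant, and solutions starting in the first quadrant exist for all $t\ge 0$. If $k_{-1}+k_2>0$, then every solution starting in the first quadrant enters the (positively invariant) subset $\{c\le e_T\}$ at some positive time. (d) The system admits no nonconstant closed trajectory.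
   Context: This is the mass-action model of the open Michaelis--Menten mechanism with constant substrate inflow: $s$ and $c$ are the concentrations of substrate and enzyme–substrate complex, $k_0$ the inflow rate, $k_1,k_{-1},k_2$ rate constants, and $e_T$ the total enzyme concentration. The ''first quadrant'' is $\{s\ge 0, c\ge 0\}$. *)

(* Defs.v *)
From Stdlib Require Import Reals List.
From Coquelicot Require Import Coquelicot.
Open Scope R_scope.

(* Open Michaelis--Menten vector field; km1 stands for k_{-1}. *)
Definition fs (k0 k1 km1 k2 eT s c : R) : R := k0 - k1 * (eT - c) * s + km1 * c.
Definition fc (k0 k1 km1 k2 eT s c : R) : R := k1 * (eT - c) * s - (km1 + k2) * c.

Definition stationary (k0 k1 km1 k2 eT : R) (p : R * R) : Prop :=
  fs k0 k1 km1 k2 eT (fst p) (snd p) = 0 /\ fc k0 k1 km1 k2 eT (fst p) (snd p) = 0.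

Definition infinite_set (P : R * R -> Prop) : Prop :=
  ~ (exists l : list (R * R), forall p, P p -> In p l).

Definition first_quadrant (p : R * R) : Prop := 0 <= fst p /\ 0 <= snd p.
Definition second_quadrant (p : R * R) : Prop := fst p < 0 /\ 0 < snd p.

Definition jac11 k0 k1 km1 k2 eT (p : R * R) : R :=
  Derive (fun x => fs k0 k1 km1 k2 eT x (snd p)) (fst p).
Definition jac12 k0 k1 km1 k2 eT (p : R * R) : R :=
  Derive (fun y => fs k0 k1 km1 k2 eT (fst p) y) (snd p).
Definition jac21 k0 k1 km1 k2 eT (p : R * R) : R :=
  Derive (fun x => fc k0 k1 km1 k2 eT x (snd p)) (fst p).
Definition jac22 k0 k1 km1 k2 eT (p : R * R) : R :=
  Derive (fun y => fc k0 k1 km1 k2 eT (fst p) y) (snd p).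

(* l1, l2 are the eigenvalues (with multiplicity) of the 2x2 matrix [[a,b],[c,d]]:
   its characteristic polynomial factors as (x-l1)(x-l2). *)
Definition eigenvalues2 (a b c d l1 l2 : R) : Prop :=
  forall x : R, (x - a) * (x - d) - b * c = (x - l1) * (x - l2).

Definition attracting_node k0 k1 km1 k2 eT (p : R * R) : Prop :=
  exists l1 l2, l1 < 0 /\ l2 < 0 /\
    eigenvalues2 (jac11 k0 k1 km1 k2 eT p) (jac12 k0 k1 km1 k2 eT p)
                 (jac21 k0 k1 km1 k2 eT p) (jac22 k0 k1 km1 k2 eT p) l1 l2.

Definition saddle_point k0 k1 km1 k2 eT (p : R * R) : Prop :=
  exists l1 l2, l1 < 0 /\ 0 < l2 /\
    eigenvalues2 (jac11 k0 k1 km1 k2 eT p) (jac12 k0 k1 km1 k2 eT p)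
                 (jac21 k0 k1 km1 k2 eT p) (jac22 k0 k1 km1 k2 eT p) l1 l2.

Definition is_solution_on k0 k1 km1 k2 eT (s c : R -> R) (I : R -> Prop) : Prop :=
  forall t, I t ->
    is_derive s t (fs k0 k1 km1 k2 eT (s t) (c t)) /\
    is_derive c t (fc k0 k1 km1 k2 eT (s t) (c t)).

Definition positively_invariant k0 k1 km1 k2 eT (A : R * R -> Prop) : Prop :=
  forall (T : R) (s c : R -> R), 0 < T ->
    is_solution_on k0 k1 km1 k2 eT s c (fun t => 0 <= t < T) ->
    A (s 0, c 0) -> forall t, 0 <= t < T -> A (s t, c t).

Definition P0 (k0 k1 km1 k2 eT : R) : R * R :=
  ((km1 + k2) * k0 / (k1 * (k2 * eT - k0)), k0 / k2).

(* Main.v *)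
Require Import Defs.
From Stdlib Require Import Reals List Lra Psatz Classical ZArith.
From Coquelicot Require Import Coquelicot.
Open Scope R_scope.

Lemma stat_iff k0 k1 km1 k2 eT s c :
  stationary k0 k1 km1 k2 eT (s,c) <-> k0 = k2*c /\ k1*(eT-c)*s = (km1+k2)*c.
Proof. unfold stationary, fs, fc; simpl; split; intros [H1 H2]; split; lra. Qed.

Lemma list_bound (l : list (R*R)) : exists B, forall p, In p l -> fst p < B.
Proof.
  induction l as [|a l [B HB]].
  - exists 0; intros p [].
  - exists (Rmax B (fst a + 1)); intros p [<-|Hp].
    + pose proof (Rmax_r B (fst a + 1)); lra.
    + pose proof (Rmax_l B (fst a + 1)); specialize (HB p Hp); lra.
Qed.

Definition cf k1 km1 eT x := k1*eT*x/(km1 + k1*x).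

Lemma fam k0 k1 km1 k2 eT x (h1 : 0 <= k1) (hm1 : 0 <= km1) (hx : 0 < x) :
  (k0 = 0 /\ k1 = 0) \/ (k0 = 0 /\ eT = 0) \/ (k0 = 0 /\ k2 = 0) ->
  stationary k0 k1 km1 k2 eT (x, cf k1 km1 eT x).
Proof.
  intros H; apply stat_iff; unfold cf.
  destruct H as [[-> ->]|[[-> ->]|[-> ->]]].
  - unfold Rdiv; rewrite !Rmult_0_l; split; ring.
  - unfold Rdiv; rewrite !Rmult_0_r, !Rmult_0_l; split; ring.
  - split; [ring|].
    destruct (Req_dec (km1 + k1*x) 0) as [E|E].
    + assert (k1 = 0) by nra. assert (km1 = 0) by nra. subst. ring.
    + field; auto.
Qed.

Lemma fam_inj k1 km1 eT x y : x <> y -> (x, cf k1 km1 eT x) <> (y, cf k1 km1 eT y).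
Proof. intros H E; inversion E; auto. Qed.

Lemma conds_infinite k0 k1 km1 k2 eT (h1 : 0 <= k1) (hm1 : 0 <= km1) :
  (k0 = 0 /\ k1 = 0) \/ (k0 = 0 /\ eT = 0) \/ (k0 = 0 /\ k2 = 0) ->
  infinite_set (stationary k0 k1 km1 k2 eT).
Proof.
  intros H [l Hl]. destruct (list_bound l) as [B HB].
  set (x := Rmax B 0 + 1).
  assert (0 < x) by (unfold x; pose proof (Rmax_r B 0); lra).
  specialize (Hl _ (fam k0 k1 km1 k2 eT x h1 hm1 H0 H)).
  specialize (HB _ Hl). simpl in HB. unfold x in HB; pose proof (Rmax_l B 0); lra.
Qed.

Lemma stat_unique k0 k1 km1 k2 eT (h0 : 0 <= k0) (h1 : 0 <= k1) (hm1 : 0 <= km1) (h2 : 0 <= k2)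
  p : ~ ((k0 = 0 /\ k1 = 0) \/ (k0 = 0 /\ eT = 0) \/ (k0 = 0 /\ k2 = 0)) ->
  stationary k0 k1 km1 k2 eT p -> k1 <> 0 /\ k2 <> 0 /\ k2*eT - k0 <> 0 /\ p = P0 k0 k1 km1 k2 eT.
Proof.
  intros Hn. destruct p as [s c]. intros [E1 E2]%stat_iff.
  assert (k2 <> 0) by (intro; subst; apply Hn; right; right; split; lra).
  assert (Hc : c = k0/k2) by (rewrite E1; field; auto).
  assert (k1*(eT-c) <> 0).
  { intro Z. rewrite Z in E2. assert (c = 0) by nra.
    assert (k0 = 0) by (subst c; nra). apply Hn.
    destruct (Rmult_integral _ _ Z) as [A|A]; [left|right;left]; split; lra. }
  assert (k1 <> 0) by (intro; subst; apply H0; ring).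
  assert (k2*eT - k0 <> 0) by (intro; apply H0; subst c; replace (eT - k0/k2) with ((k2*eT-k0)/k2) by (field; auto); rewrite H2; unfold Rdiv; ring).
  split; [auto|split;[auto|split;[auto|]]].
  unfold P0; f_equal; [|auto].
  assert (eT - c = (k2*eT-k0)/k2) by (subst c; field; auto).
  rewrite H3 in E2. apply (Rmult_eq_reg_l (k1 * ((k2*eT-k0)/k2))).
  - rewrite E2, Hc. field; auto.
  - rewrite <- H3; auto.
Qed.

Lemma P0_stat k0 k1 km1 k2 eT : k1 <> 0 -> k2 <> 0 -> k2*eT - k0 <> 0 ->
  stationary k0 k1 km1 k2 eT (P0 k0 k1 km1 k2 eT).
Proof. intros. unfold P0. apply stat_iff. split; field; auto. Qed.

Lemma eig_gen a b c d : (a+d)^2 - 4*(a*d-b*c) >= 0 ->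
  let q := sqrt ((a+d)^2 - 4*(a*d-b*c)) in
  eigenvalues2 a b c d (((a+d) - q)/2) (((a+d) + q)/2) /\ q*q = (a+d)^2 - 4*(a*d-b*c) /\ 0 <= q.
Proof.
  intros H q. assert (Hq : q*q = (a+d)^2 - 4*(a*d-b*c)) by (apply sqrt_sqrt; lra).
  split; [|split; [auto| apply sqrt_pos]].
  intro x. field_simplify. rewrite ?Rmult_1_r. 
  replace (q^2) with (q*q) by ring. rewrite Hq. field.
Qed.

Lemma node_lem a b c d : a+d<0 -> a*d-b*c>0 -> (a+d)^2 - 4*(a*d-b*c) >= 0 ->
  exists l1 l2, l1<0 /\ l2<0 /\ eigenvalues2 a b c d l1 l2.
Proof.
  intros H1 H2 H3. destruct (eig_gen a b c d H3) as [E [Hq Hp]].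
  simpl in *. set (q := sqrt _) in *. exists (((a+d) - q)/2), (((a+d) + q)/2).
  clearbody q. split; [lra|split; [|auto]]. nra.
Qed.

Lemma saddle_lem a b c d : a*d-b*c<0 ->
  exists l1 l2, l1<0 /\ 0<l2 /\ eigenvalues2 a b c d l1 l2.
Proof.
  intros H2. assert (H3 : (a+d)^2 - 4*(a*d-b*c) >= 0) by (pose proof (pow2_ge_0 (a+d)); lra).
  destruct (eig_gen a b c d H3) as [E [Hq Hp]].
  simpl in *. set (q := sqrt _) in *. exists (((a+d) - q)/2), (((a+d) + q)/2).
  clearbody q. split; [nra|split; [nra|auto]].
Qed.

Lemma jac_vals k0 k1 km1 k2 eT s c :
  jac11 k0 k1 km1 k2 eT (s,c) = -(k1*(eT-c)) /\
  jac12 k0 k1 km1 k2 eT (s,c) = k1*s + km1 /\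
  jac21 k0 k1 km1 k2 eT (s,c) = k1*(eT-c) /\
  jac22 k0 k1 km1 k2 eT (s,c) = -(k1*s) - (km1+k2).
Proof.
  unfold jac11, jac12, jac21, jac22, fs, fc; simpl.
  repeat split; apply is_derive_unique; auto_derive; auto; ring.
Qed.

Lemma D_val (f : R -> R) (x l l' : R) : is_derive f x l -> @eq R l l' -> is_derive f x l'.
Proof. intros H ->; auto. Qed.

Lemma D_mult (f g : R -> R) x df dg : is_derive f x df -> is_derive g x dg ->
  is_derive (fun t => f t * g t) x (df * g x + f x * dg).
Proof.
  intros Hf Hg. pose proof (is_derive_mult f g x df dg Hf Hg) as K.
  apply K. intros; apply Rmult_comm.
Qed.

Definition negsq (x : R) := (Rmin x 0)^2.

Lemma negsq_derive x : is_derive negsq x (2 * Rmin x 0).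
Proof.
  destruct (Rlt_or_le x 0) as [H|H].
  - rewrite Rmin_left by lra.
    apply is_derive_ext_loc with (fun y => y^2).
    + apply locally_interval with m_infty 0; simpl; auto.
      intros y _ Hy. unfold negsq. rewrite Rmin_left by lra. auto.
    + auto_derive; auto; ring.
  - destruct H as [H|H].
    + rewrite Rmin_right by lra.
      apply is_derive_ext_loc with (fun y => 0).
      * apply locally_interval with 0 p_infty; simpl; auto.
        intros y Hy _. unfold negsq. rewrite Rmin_right by lra. ring.
      * auto_derive; auto; ring.
    + subst x. rewrite Rmin_right by lra. replace (2*0) with 0 by ring.
      apply is_derive_Reals. intros eps Heps. exists (mkposreal eps Heps).
      intros h Hh0 Hh. simpl in Hh. unfold negsq.
      rewrite Rplus_0_l, (Rmin_right 0 0) by lra.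
      replace ((Rmin h 0)^2 - 0^2) with ((Rmin h 0)^2) by ring.
      assert (Rabs (Rmin h 0) <= Rabs h).
      { unfold Rmin; destruct (Rle_dec h 0); rewrite ?Rabs_R0; [lra|apply Rabs_pos]. }
      rewrite Rminus_0_r, Rabs_div by auto.
      rewrite <- RPow_abs. apply Rmult_lt_reg_r with (Rabs h).
      apply Rabs_pos_lt; auto. unfold Rdiv. rewrite Rmult_assoc, Rinv_l.
      2: apply Rabs_no_R0; auto.
      pose proof (Rabs_pos (Rmin h 0)). pose proof (Rabs_pos_lt h Hh0).
      set (u := Rabs (Rmin h 0)) in *. set (v := Rabs h) in *.
      assert (u*u <= v*v) by (apply Rmult_le_compat; auto).
      assert (v*v < eps*v) by (apply Rmult_lt_compat_r; auto).
      simpl. lra.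
Qed.

Lemma negsq_ge0 x : 0 <= negsq x.
Proof. unfold negsq. apply pow2_ge_0. Qed.

Lemma negsq_zero x : negsq x = 0 -> 0 <= x.
Proof.
  unfold negsq. intros H. destruct (Rle_or_lt 0 x) as [|Hx]; auto.
  rewrite Rmin_left in H by lra. nra.
Qed.

Lemma negsq_of_nonneg x : 0 <= x -> negsq x = 0.
Proof. intros; unfold negsq; rewrite Rmin_right by lra; ring. Qed.



Lemma negsq_comp f x df : is_derive f x df ->
  is_derive (fun t => negsq (f t)) x (2 * Rmin (f x) 0 * df).
Proof.
  intros H. pose proof (is_derive_comp negsq f x _ _ (negsq_derive (f x)) H) as K.
  simpl in K. replace (2 * Rmin (f x) 0 * df) with (scal df (2 * Rmin (f x) 0)); auto.
  unfold scal; simpl; unfold mult; simpl. ring.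
Qed.

Lemma mn_facts x y : Rmin x 0 <= 0 /\ x * Rmin x 0 = (Rmin x 0)^2 /\
   y * Rmin x 0 <= Rmin y 0 * Rmin x 0.
Proof.
  unfold Rmin; destruct (Rle_dec x 0); destruct (Rle_dec y 0); repeat split; try lra; try ring; nra.
Qed.

Lemma deriv_cont f x df : is_derive f x df -> continuity_pt f x.
Proof.
  intros H. apply continuity_pt_filterlim. apply (ex_derive_continuous f x). exists df; auto.
Qed.

Lemma gronwall (phi dphi h : R -> R) a b :
  a <= b ->
  (forall t, a <= t <= b -> is_derive phi t (dphi t)) ->
  (forall t, a <= t <= b -> continuity_pt h t) ->
  (forall t, a <= t <= b -> dphi t <= h t * phi t) ->
  (forall t, a <= t <= b -> 0 <= phi t) ->
  phi a = 0 -> forall t, a <= t <= b -> phi t = 0.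
Proof.
  intros Hab Hd Hc Hle Hpos H0 t Ht.
  destruct (continuity_ab_maj h a b Hab Hc) as [Mx [HM _]].
  set (K := Rmax (h Mx) 0).
  assert (HK : forall x, a <= x <= b -> dphi x <= K * phi x).
  { intros x Hx. specialize (Hle x Hx). specialize (HM x Hx). specialize (Hpos x Hx).
    pose proof (Rmax_l (h Mx) 0). fold K in H. nra. }
  set (psi := fun x => phi x * exp (-(K * x))).
  set (dpsi := fun x => (dphi x - K * phi x) * exp (-(K*x))).
  assert (Dpsi : forall x, a <= x <= b -> is_derive psi x (dpsi x)).
  { intros x Hx. unfold psi, dpsi.
    eapply D_val. apply (D_mult phi (fun x => exp (-(K*x))) x (dphi x) (exp (-(K*x)) * (-K)) (Hd x Hx)).
    - auto_derive; [auto|ring].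
    - ring. }
  destruct (MVT_gen psi a t dpsi) as [c [Hc1 Hc2]].
  - rewrite Rmin_left, Rmax_right by lra. intros x Hx. apply Dpsi. lra.
  - rewrite Rmin_left, Rmax_right by lra. intros x Hx. eapply deriv_cont. apply Dpsi. lra.
  - rewrite Rmin_left, Rmax_right in Hc1 by lra.
    assert (dpsi c <= 0).
    { unfold dpsi. pose proof (exp_pos (-(K*c))). specialize (HK c ltac:(lra)). nra. }
    unfold psi in Hc2. rewrite H0, Rmult_0_l, Rminus_0_r in Hc2.
    pose proof (exp_pos (-(K*t))). specialize (Hpos t Ht).
    assert (phi t * exp (- (K * t)) <= 0) by nra.
    nra.
Qed.

Lemma D_cminus a (f:R->R) x d : is_derive f x d -> is_derive (fun t => a - f t) x (0 - d).
Proof.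
  intro H. pose proof (is_derive_minus (fun _ => a) f x _ d (is_derive_const a x) H) as K.
  eapply D_val; [exact K|]. simpl. unfold minus, zero, plus, opp; simpl. ring.
Qed.

Lemma ex_cont (h : R -> R) x : ex_derive h x -> continuity_pt h x.
Proof. intros [d Hd]. eapply deriv_cont; eauto. Qed.


Lemma ineq_fq k0 k1 km1 k2 eT s c ms mc :
  0 <= k0 -> 0 <= k1 -> 0 <= km1 -> 0 <= k2 -> 0 <= eT ->
  ms <= 0 -> mc <= 0 -> s*ms = ms^2 -> c*mc = mc^2 -> c*ms <= mc*ms -> s*mc <= ms*mc ->
  2*ms*(fs k0 k1 km1 k2 eT s c) + 2*mc*(fc k0 k1 km1 k2 eT s c) <=
  (k1*((eT-c)^2+1) + km1 + k1*eT + k1*(s^2+1)) * (ms^2 + mc^2).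
Proof.
  intros p0 p1 pm1 p2 pT Hms Hmc Es Ec Lc Ls. unfold fs, fc.
  assert (A1 : 2*ms*k0 <= 0) by (clear -Hms p0; nra).
  assert (A2 : -2*k1*(eT-c)*s*ms <= k1*((eT-c)^2+1)*ms^2).
  { replace (-2*k1*(eT-c)*s*ms) with (k1*(-2*(eT-c))*(s*ms)) by ring. rewrite Es.
    assert (-2*(eT-c) <= (eT-c)^2+1) by (clear; pose proof (pow2_ge_0 (eT-c+1)); nra).
    assert (0 <= ms^2) by (clear; nra). clear -H H0 p1.
    apply Rmult_le_compat_r with (r := k1 * ms^2) in H; [|nra]. nra. }
  assert (A3 : 2*ms*km1*c <= km1*(ms^2+mc^2)).
  { assert (2*mc*ms <= ms^2+mc^2) by (clear; pose proof (pow2_ge_0 (ms-mc)); nra). clear -H Lc pm1. nra. }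
  assert (A4 : 2*mc*k1*eT*s <= k1*eT*(ms^2+mc^2)).
  { assert (2*mc*ms <= ms^2+mc^2) by (clear; pose proof (pow2_ge_0 (ms-mc)); nra).
    assert (0 <= k1*eT) by (clear -p1 pT; nra). clear -H H0 Ls. nra. }
  assert (A5 : -2*mc*k1*c*s <= k1*(s^2+1)*mc^2).
  { replace (-2*mc*k1*c*s) with (k1*(-2*s)*(c*mc)) by ring. rewrite Ec.
    assert (-2*s <= s^2+1) by (clear; pose proof (pow2_ge_0 (s+1)); nra). assert (0 <= mc^2) by (clear; nra). clear -H H0 p1.
    apply Rmult_le_compat_r with (r := k1 * mc^2) in H; [|nra]. nra. }
  assert (A6 : -2*mc*(km1+k2)*c <= 0).
  { replace (-2*mc*(km1+k2)*c) with (-2*(km1+k2)*(c*mc)) by ring. rewrite Ec.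
    assert (0 <= mc^2) by (clear; nra). clear -H pm1 p2. nra. }
  Ltac pos := repeat first [apply pow2_ge_0 | lra | apply Rmult_le_pos | apply Rplus_le_le_0_compat].
  assert (0 <= k1*((eT-c)^2+1)*mc^2) by pos.
  assert (0 <= k1*(s^2+1)*ms^2) by pos.
  assert (0 <= km1 * ms^2 /\ 0 <= km1 * mc^2 /\ 0 <= k1*eT*ms^2 /\ 0 <= k1*eT*mc^2) by
    (repeat split; pos).
  clear -A1 A2 A3 A4 A5 A6 H H0 H1. nra.
Qed.

Lemma sol_derive k0 k1 km1 k2 eT s c (I : R -> Prop) t :
  is_solution_on k0 k1 km1 k2 eT s c I -> I t ->
  ex_derive s t /\ ex_derive c t /\ Derive s t = fs k0 k1 km1 k2 eT (s t) (c t) /\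
  Derive c t = fc k0 k1 km1 k2 eT (s t) (c t).
Proof.
  intros H It. destruct (H t It) as [H1 H2].
  split; [eexists; eauto|split; [eexists; eauto|split; apply is_derive_unique; auto]].
Qed.

Lemma inv_fq k0 k1 km1 k2 eT (h0 : 0 <= k0) (h1 : 0 <= k1) (hm1 : 0 <= km1) (h2 : 0 <= k2) (hT : 0 <= eT) :
  positively_invariant k0 k1 km1 k2 eT first_quadrant.
Proof.
  intros T s c HT Hsol [Hs0 Hc0] t Ht. simpl in *.
  set (phi := fun x => negsq (s x) + negsq (c x)).
  assert (Z : forall x, 0 <= x <= t -> phi x = 0).
  { apply (gronwall phi
      (fun x => 2 * Rmin (s x) 0 * fs k0 k1 km1 k2 eT (s x) (c x) + 2 * Rmin (c x) 0 * fc k0 k1 km1 k2 eT (s x) (c x))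
      (fun x => k1*((eT-c x)^2+1) + km1 + k1*eT + k1*((s x)^2+1))); try lra.
    - intros x Hx. destruct (Hsol x ltac:(lra)) as [Ds Dc].
      unfold phi. apply (is_derive_plus (fun x => negsq (s x)) (fun x => negsq (c x))).
      + apply negsq_comp; auto.
      + apply negsq_comp; auto.
    - intros x Hx. destruct (sol_derive _ _ _ _ _ _ _ _ x Hsol ltac:(simpl; lra)) as [E1 [E2 _]].
      apply ex_cont. auto_derive. tauto.
    - intros x Hx. unfold phi, negsq.
      destruct (mn_facts (s x) (c x)) as [F1 [F2 F3]].
      destruct (mn_facts (c x) (s x)) as [G1 [G2 G3]].
      apply ineq_fq; auto. 
    - intros x Hx. unfold phi. pose proof (negsq_ge0 (s x)); pose proof (negsq_ge0 (c x)); lra.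
    - unfold phi. rewrite !negsq_of_nonneg by auto. ring. }
  specialize (Z t ltac:(lra)). unfold phi in Z; cbv beta in Z.
  pose proof (negsq_ge0 (s t)); pose proof (negsq_ge0 (c t)).
  split; simpl; apply negsq_zero; lra.
Qed.

Lemma inv_fq2 k0 k1 km1 k2 eT (h0 : 0 <= k0) (h1 : 0 <= k1) (hm1 : 0 <= km1) (h2 : 0 <= k2) (hT : 0 <= eT) :
  positively_invariant k0 k1 km1 k2 eT (fun p => first_quadrant p /\ snd p <= eT).
Proof.
  intros T s c HT Hsol [HQ Hc0] t Ht. simpl in *.
  pose proof (inv_fq k0 k1 km1 k2 eT h0 h1 hm1 h2 hT T s c HT Hsol HQ) as FQ.
  split; [apply FQ; auto|].
  set (phi := fun x => negsq (eT - c x)).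
  assert (Z : forall x, 0 <= x <= t -> phi x = 0).
  { apply (gronwall phi
      (fun x => 2 * Rmin (eT - c x) 0 * (0 - fc k0 k1 km1 k2 eT (s x) (c x)))
      (fun x => 0)); try lra.
    - intros x Hx. destruct (Hsol x ltac:(lra)) as [Ds Dc].
      unfold phi. apply (negsq_comp (fun x => eT - c x)). apply D_cminus. auto.
    - intros x Hx. apply continuity_pt_const. intros ? ?; auto.
    - intros x Hx. destruct (FQ x ltac:(lra)) as [Hs Hc]; simpl in Hs, Hc.
      destruct (mn_facts (eT - c x) 0) as [F1 [F2 _]]. unfold fc.
      set (m := Rmin (eT - c x) 0) in *.
      replace (2 * m * (0 - (k1 * (eT - c x) * s x - (km1 + k2) * c x)))
        with (-2*k1*s x*((eT - c x)*m) + 2*(km1+k2)*c x*m) by ring.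
      rewrite F2. assert (0 <= m^2) by nra. assert (0 <= k1 * s x) by nra.
      assert (0 <= (km1+k2)*c x) by nra. nra.
    - intros x Hx. apply negsq_ge0.
    - unfold phi. apply negsq_of_nonneg. lra. }
  specialize (Z t ltac:(lra)). unfold phi in Z; cbv beta in Z. apply negsq_zero in Z. lra.
Qed.

Lemma sol_restrict k0 k1 km1 k2 eT s c (I J : R -> Prop) :
  (forall t, J t -> I t) -> is_solution_on k0 k1 km1 k2 eT s c I -> is_solution_on k0 k1 km1 k2 eT s c J.
Proof. intros H S t Jt. apply S, H, Jt. Qed.

Lemma eventually_le k0 k1 km1 k2 eT (h0 : 0 <= k0) (h1 : 0 <= k1) (hm1 : 0 <= km1) (h2 : 0 <= k2) (hT : 0 <= eT) :
  0 < km1 + k2 -> 0 < eT ->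
     forall s c : R -> R, is_solution_on k0 k1 km1 k2 eT s c (fun t => 0 <= t) ->
       first_quadrant (s 0, c 0) -> exists t, 0 < t /\ c t <= eT.
Proof.
  intros Ha He s c Hsol HQ.
  assert (FQ : forall t, 0 <= t -> first_quadrant (s t, c t)).
  { intros t Ht. apply (inv_fq k0 k1 km1 k2 eT h0 h1 hm1 h2 hT (t+1) s c ltac:(lra)); auto; [|lra].
    eapply sol_restrict; [|exact Hsol]. simpl; intros; lra. }
  destruct (Rle_or_lt (c 0) eT) as [Hc|Hc].
  - exists 1. split; [lra|].
    refine (proj2 (inv_fq2 k0 k1 km1 k2 eT h0 h1 hm1 h2 hT 2 s c ltac:(lra) _ (conj HQ Hc) 1 ltac:(lra))).
    eapply sol_restrict; [|exact Hsol]. simpl; intros; lra.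
  - apply NNPP. intro N.
    assert (N' : forall t, 0 < t -> c t > eT).
    { intros t Ht. destruct (Rlt_or_le eT (c t)); auto. exfalso; apply N; exists t; auto. }
    set (t1 := c 0 / ((km1+k2)*eT) + 1).
    assert (Hp : 0 < (km1+k2)*eT) by nra.
    assert (Ht1 : 0 < t1) by (unfold t1; assert (0 <= c 0 / ((km1+k2)*eT)) by (apply Rdiv_le_0_compat; lra); lra).
    destruct (MVT_gen c 0 t1 (fun x => fc k0 k1 km1 k2 eT (s x) (c x))) as [xi [Hxi E]].
    + rewrite Rmin_left, Rmax_right by lra. intros x Hx. apply (Hsol x). simpl; lra.
    + rewrite Rmin_left, Rmax_right by lra. intros x Hx. eapply deriv_cont. apply (Hsol x). simpl; lra.
    + rewrite Rmin_left, Rmax_right in Hxi by lra.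
      assert (Cx : c xi >= eT).
      { destruct (Req_dec xi 0) as [->|]; [lra|]. apply Rgt_ge, N'. lra. }
      destruct (FQ xi ltac:(lra)) as [Sx _]; simpl in Sx.
      assert (fc k0 k1 km1 k2 eT (s xi) (c xi) <= -((km1+k2)*eT)).
      { unfold fc. assert (k1*(eT - c xi)*s xi <= 0).
        { assert (0 <= k1 * s xi) by nra. nra. }
        nra. }
      assert (c t1 <= c 0 - (km1+k2)*eT*t1) by nra.
      assert ((km1+k2)*eT*t1 = c 0 + (km1+k2)*eT) by (unfold t1; field; lra).
      specialize (N' t1 Ht1). nra.
Qed.

Lemma arch x : exists n : nat, x < INR n.
Proof.
  destruct (archimed x) as [H1 H2].
  destruct (Z.le_gt_cases (up x) 0) as [Z|Z].
  - exists 0%nat. simpl. apply IZR_le in Z. lra.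
  - exists (Z.to_nat (up x)). rewrite INR_IZR_INZ, Z2Nat.id by lia. lra.
Qed.

Lemma per_nat (f : R -> R) T : (forall t, f (t + T) = f t) ->
  forall n t, f (t + INR n * T) = f t.
Proof.
  intros H n; induction n as [|n IH]; intros t.
  - simpl. rewrite Rmult_0_l, Rplus_0_r. auto.
  - rewrite S_INR. replace (t + (INR n + 1) * T) with ((t + INR n * T) + T) by ring.
    rewrite H. auto.
Qed.

Lemma incr_MVT (g dg : R -> R) : (forall t, is_derive g t (dg t)) -> (forall t, 0 <= dg t) ->
  forall x y, x <= y -> g x <= g y.
Proof.
  intros D P x y Hxy.
  destruct (MVT_gen g x y dg) as [c [_ E]].
  - intros; apply D.
  - intros; eapply deriv_cont; apply D.
  - specialize (P c). nra.
Qed.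

Lemma per_mono (g dg : R -> R) T : 0 < T ->
  (forall t, is_derive g t (dg t)) -> (forall t, 0 <= dg t) -> (forall t, g (t + T) = g t) ->
  (forall t, g t = g 0) /\ (forall t, dg t = 0).
Proof.
  intros HT D P Per.
  assert (C : forall t, g t = g 0).
  { intros t. destruct (arch (Rabs t / T)) as [n Hn].
    assert (Hn' : Rabs t < INR n * T).
    { apply Rmult_lt_compat_r with (r := T) in Hn; auto. unfold Rdiv in Hn.
      rewrite Rmult_assoc, Rinv_l, Rmult_1_r in Hn by lra. lra. }
    pose proof (Rle_abs t). pose proof (Rle_abs (-t)). rewrite Rabs_Ropp in H0.
    assert (A1 : g (- (INR n * T)) <= g t) by (apply (incr_MVT g dg); auto; lra).
    assert (A2 : g t <= g (INR n * T)) by (apply (incr_MVT g dg); auto; lra).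
    pose proof (per_nat g T Per n (-(INR n * T))) as E1.
    replace (- (INR n * T) + INR n * T) with 0 in E1 by ring.
    pose proof (per_nat g T Per n 0) as E2. rewrite Rplus_0_l in E2.
    lra. }
  split; auto. intros t.
  pose proof (is_derive_unique _ _ _ (D t)) as E.
  rewrite (Derive_ext g (fun _ => g 0)) in E by auto. rewrite Derive_const in E. auto.
Qed.

Lemma per_mono' (g dg : R -> R) T : 0 < T ->
  (forall t, is_derive g t (dg t)) -> (forall t, dg t <= 0) -> (forall t, g (t + T) = g t) ->
  (forall t, dg t = 0).
Proof.
  intros HT D P Per.
  destruct (per_mono (fun t => - g t) (fun t => - dg t) T HT) as [_ Z].
  - intros t. apply (is_derive_opp g t (dg t)). auto.
  - intros t; specialize (P t); lra.
  - intros t; rewrite Per; auto.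
  - intros t; specialize (Z t); lra.
Qed.

Lemma fwd_inv (phi dphi h : R -> R) T t1 : 0 < T ->
  (forall t, is_derive phi t (dphi t)) -> (forall t, continuity_pt h t) ->
  (forall t, dphi t <= h t * phi t) -> (forall t, 0 <= phi t) -> phi t1 = 0 ->
  (forall t, phi (t + T) = phi t) -> forall t, phi t = 0.
Proof.
  intros HT D C L P Z Per.
  assert (F : forall t, t1 <= t -> phi t = 0).
  { intros t Ht. apply (gronwall phi dphi h t1 t); auto; lra. }
  intros t. destruct (arch ((t1 - t) / T)) as [n Hn].
  assert (Hn' : t1 - t < INR n * T).
  { apply Rmult_lt_compat_r with (r := T) in Hn; auto. unfold Rdiv in Hn.
    rewrite Rmult_assoc, Rinv_l, Rmult_1_r in Hn by lra. lra. }
  rewrite <- (per_nat phi T Per n t). apply F. lra.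
Qed.

Definition Efun k0 k1 km1 k2 eT sg (s c : R -> R) t :=
  (k1 * s t - (km1+k2) * c t / (eT - c t))^2 / 2 - k1*k2*c t - k1*(k2*eT - k0)*ln(sg*(eT - c t)).
Definition dEfun (k0 k1 km1 k2 eT : R) (s c : R -> R) t :=
  -((k1 * s t - (km1+k2)*c t/(eT - c t))^2 / (eT - c t)) * (k1*(eT - c t)^2 + (km1+k2)*eT).

Lemma energy_deriv k0 k1 km1 k2 eT (s c : R -> R) t sg : sg <> 0 -> 0 < sg*(eT - c t) ->
  is_derive s t (fs k0 k1 km1 k2 eT (s t) (c t)) -> is_derive c t (fc k0 k1 km1 k2 eT (s t) (c t)) ->
  is_derive (Efun k0 k1 km1 k2 eT sg s c) t (dEfun k0 k1 km1 k2 eT s c t).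
Proof.
  intros Hsg Hp Ds Dc.
  assert (He : eT - c t <> 0) by (intro Z; rewrite Z in Hp; lra).
  pose proof (is_derive_unique _ _ _ Ds) as Es. pose proof (is_derive_unique _ _ _ Dc) as Ec.
  unfold Efun. eapply D_val.
  - auto_derive; [repeat split; auto; try (eexists; eauto)|reflexivity].
  - change (Derive (fun x => s x) t) with (Derive s t). change (Derive (fun x => c x) t) with (Derive c t).
    rewrite Es, Ec. unfold dEfun, fs, fc. field. auto.
Qed.



Lemma no_periodic k0 k1 km1 k2 eT (h0 : 0 <= k0) (h1 : 0 <= k1) (hm1 : 0 <= km1) (h2 : 0 <= k2) (hT : 0 <= eT) :
  forall (s c : R -> R) (T : R),
     is_solution_on k0 k1 km1 k2 eT s c (fun _ => True) -> 0 < T ->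
     (forall t, s (t + T) = s t /\ c (t + T) = c t) ->
     forall t, s t = s 0 /\ c t = c 0.
Proof.
  intros s c T Hsol HT Hper.
  assert (Ds : forall t, is_derive s t (fs k0 k1 km1 k2 eT (s t) (c t))) by (intro t; apply (Hsol t I)).
  assert (Dc : forall t, is_derive c t (fc k0 k1 km1 k2 eT (s t) (c t))) by (intro t; apply (Hsol t I)).
  assert (Es : forall t, Derive s t = fs k0 k1 km1 k2 eT (s t) (c t)) by (intro; apply is_derive_unique; auto).
  assert (Ec : forall t, Derive c t = fc k0 k1 km1 k2 eT (s t) (c t)) by (intro; apply is_derive_unique; auto).
  assert (Xs : forall t, ex_derive s t) by (intro t; eexists; apply Ds).
  assert (Xc : forall t, ex_derive c t) by (intro t; eexists; apply Dc).
  assert (Ps : forall t, s (t + T) = s t) by (intro; apply Hper).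
  assert (Pc : forall t, c (t + T) = c t) by (intro; apply Hper).
  Ltac dd Es Ec Xs Xc :=
    eapply D_val; [auto_derive; [repeat split; auto | reflexivity] |];
    repeat match goal with
    | |- context [Derive (fun x => ?f x) ?t] => change (Derive (fun x => f x) t) with (Derive f t)
    end; rewrite ?Es, ?Ec.
  destruct (Req_dec (km1 + k2) 0) as [Ha|Ha].
  -
    assert (km1 = 0) by lra. assert (k2 = 0) by lra. subst km1 k2.
    destruct (per_mono (fun t => s t + c t) (fun _ => k0) T HT) as [U Z].
    + intros t. dd Es Ec Xs Xc. unfold fs, fc. ring.
    + auto.
    + intros t. rewrite Ps, Pc. auto.
    + specialize (Z 0). subst k0.
      set (u0 := s 0 + c 0) in *.
      destruct (per_mono (fun t => k1*(eT*u0*c t - (eT+u0)*(c t)^2/2 + (c t)^3/3))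
                 (fun t => (fc 0 k1 0 0 eT (s t) (c t))^2) T HT) as [_ Z].
      * intros t. dd Es Ec Xs Xc. 
        replace (s t) with (u0 - c t) by (specialize (U t); simpl in U; lra).
        unfold fc. field.
      * intros; apply pow2_ge_0.
      * intros t. rewrite Pc. auto.
      * destruct (per_mono c (fun t => fc 0 k1 0 0 eT (s t) (c t)) T HT) as [Cc _].
        -- auto.
        -- intros t. specialize (Z t). simpl in Z. nra.
        -- auto.
        -- intros t. specialize (U t). specialize (Cc t). simpl in U. unfold u0 in *. split; lra.
  - destruct (Req_dec k1 0) as [Hk|Hk].
    +
      subst k1.
      pose proof (per_mono' (fun t => (c t)^2) (fun t => -2*(km1+k2)*(c t)^2) T HT) as Z.
      assert (Z' : forall t, c t = 0).
      { intros t. assert (-2*(km1+k2)*(c t)^2 = 0).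
        { apply Z.
          - intros x. dd Es Ec Xs Xc. unfold fc. ring.
          - intros x. assert (0 <= (c x)^2) by apply pow2_ge_0.
            assert (0 <= (km1+k2)*(c x)^2) by (apply Rmult_le_pos; lra). lra.
          - intros x. rewrite Pc. auto. }
        assert ((c t)^2 = 0) by (apply (Rmult_eq_reg_l (-2*(km1+k2))); lra).
        nra. }
      destruct (per_mono s (fun _ => k0) T HT) as [Cs _].
      * intros t. eapply D_val; [apply Ds|]. unfold fs. rewrite Z'. ring.
      * auto.
      * auto.
      * intros t. rewrite !Z'. auto.
    +
      assert (Hk1 : 0 < k1) by lra. assert (Hal : 0 < km1 + k2) by lra.
      assert (Cc : forall t, continuity_pt c t) by (intro t; eapply deriv_cont; apply Dc).
      assert (Cs : forall t, continuity_pt s t) by (intro t; eapply deriv_cont; apply Ds).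
      destruct (classic (exists t1, c t1 = eT)) as [[t1 Ht1]|Hno].
      *
        assert (Le : forall t, c t <= eT).
        { intros t. 
          assert (Z := fwd_inv (fun t => negsq (eT - c t))
             (fun t => 2 * Rmin (eT - c t) 0 * (0 - fc k0 k1 km1 k2 eT (s t) (c t)))
             (fun t => k1 * ((s t)^2 + 1)) T t1 HT).
          cut (negsq (eT - c t) = 0); [intro W; apply negsq_zero in W; lra|]. apply Z.
          - intros x. apply (negsq_comp (fun x => eT - c x)). apply D_cminus. auto.
          - intros x. apply ex_cont. auto_derive. auto.
          - intros x. unfold fc. set (m := Rmin (eT - c x) 0).
            assert (Fm : (eT - c x) * m = m^2 /\ c x * m <= 0 /\ m <= 0).
            { unfold m, Rmin; destruct (Rle_dec (eT - c x) 0); repeat split; try ring; try lra; nra. }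
            destruct Fm as [F1 [F2 F3]].
            replace (2 * m * (0 - (k1 * (eT - c x) * s x - (km1 + k2) * c x)))
              with (k1*(-2*s x)*((eT - c x)*m) + 2*(km1+k2)*(c x*m)) by ring.
            rewrite F1. unfold negsq. fold m.
            assert (-2*s x <= (s x)^2+1) by (pose proof (pow2_ge_0 (s x+1)); nra).
            assert (0 <= m^2) by apply pow2_ge_0.
            assert (k1*(-2*s x)*m^2 <= k1*((s x)^2+1)*m^2).
            { apply Rmult_le_compat_r; auto. apply Rmult_le_compat_l; lra. }
            assert (0 <= (km1+k2)*(-(c x*m))) by (apply Rmult_le_pos; lra).
            lra.
          - intros; apply negsq_ge0.
          - rewrite Ht1. apply negsq_of_nonneg. lra.
          - intros x. rewrite Pc. auto. }
        assert (D0 : fc k0 k1 km1 k2 eT (s t1) (c t1) = 0).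
        { assert (pr : derivable_pt c t1).
          { exists (fc k0 k1 km1 k2 eT (s t1) (c t1)). apply is_derive_Reals. auto. }
          pose proof (deriv_maximum c (t1-1) (t1+1) t1 pr ltac:(lra) ltac:(lra)) as M.
          rewrite <- M. 2: { intros; rewrite Ht1; auto. }
          clear M. destruct pr as [l Hl]. simpl. change (derivable_pt_lim c t1 l) in Hl. apply (proj2 (is_derive_Reals c t1 l)) in Hl.
          eapply is_derive_unique in Hl. rewrite (is_derive_unique _ _ _ (Dc t1)) in Hl. auto. }
        rewrite Ht1 in D0. unfold fc in D0.
        assert (HeT : eT = 0) by (replace (eT - eT) with 0 in D0 by ring; nra). rewrite HeT in *. clear HeT.
        assert (Ge : forall t, 0 <= c t).
        { intros t. 
          assert (Z := fwd_inv (fun t => negsq (c t))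
             (fun t => 2 * Rmin (c t) 0 * fc k0 k1 km1 k2 0 (s t) (c t))
             (fun t => k1 * ((s t)^2 + 1)) T t1 HT).
          cut (negsq (c t) = 0); [apply negsq_zero|]. apply Z.
          - intros x. apply negsq_comp. auto.
          - intros x. apply ex_cont. auto_derive. auto.
          - intros x. unfold fc. set (m := Rmin (c x) 0).
            assert (Fm : c x * m = m^2 /\ m <= 0).
            { unfold m, Rmin; destruct (Rle_dec (c x) 0); repeat split; try ring; try lra. }
            destruct Fm as [F1 F3].
            replace (2 * m * (k1 * (0 - c x) * s x - (km1 + k2) * c x))
              with (k1*(-2*s x)*(c x*m) - 2*(km1+k2)*(c x*m)) by ring.
            rewrite F1. unfold negsq. fold m.
            assert (-2*s x <= (s x)^2+1) by (pose proof (pow2_ge_0 (s x+1)); nra).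
            assert (0 <= m^2) by apply pow2_ge_0.
            assert (k1*(-2*s x)*m^2 <= k1*((s x)^2+1)*m^2).
            { apply Rmult_le_compat_r; auto. apply Rmult_le_compat_l; lra. }
            assert (0 <= (km1+k2)*m^2) by (apply Rmult_le_pos; lra).
            lra.
          - intros; apply negsq_ge0.
          - rewrite Ht1. apply negsq_of_nonneg. lra.
          - intros x. rewrite Pc. auto. }
        assert (Z' : forall t, c t = 0) by (intro t; specialize (Le t); specialize (Ge t); lra).
        destruct (per_mono s (fun _ => k0) T HT) as [Cs' _].
        -- intros t. eapply D_val; [apply Ds|]. unfold fs. rewrite Z'. ring.
        -- auto.
        -- auto.
        -- intros t. rewrite !Z'. auto.
      *
        assert (Ne : forall t, c t <> eT) by (intros t E; apply Hno; exists t; auto).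
        assert (Side : exists sg, (sg = 1 \/ sg = -1) /\ forall t, 0 < sg * (eT - c t)).
        { assert (Hcont : continuity c) by exact Cc.
          destruct (Rlt_or_le (c 0) eT) as [L0|L0].
          - exists 1. split; auto. intros t. rewrite Rmult_1_l.
            destruct (Rlt_or_le (c t) eT) as [|G]; [lra|].
            exfalso. destruct (IVT_gen c 0 t eT Hcont) as [x [_ Hx]].
            + split; [apply Rle_trans with (c 0); [apply Rmin_l|lra] | apply Rle_trans with (c t); [lra|apply Rmax_r]].
            + apply (Ne x Hx).
          - assert (L0' : eT < c 0) by (destruct L0; auto; exfalso; apply (Ne 0); auto).
            exists (-1). split; auto. intros t.
            destruct (Rlt_or_le eT (c t)) as [|G]; [lra|].
            exfalso. destruct (IVT_gen c 0 t eT Hcont) as [x [_ Hx]].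
            + split; [apply Rle_trans with (c t); [apply Rmin_r|lra] | apply Rle_trans with (c 0); [lra|apply Rmax_l]].
            + apply (Ne x Hx). }
        destruct Side as [sg [Hsg Hpos]].
        assert (Hsg0 : sg <> 0) by (destruct Hsg; lra).
        assert (DE : forall t, is_derive (Efun k0 k1 km1 k2 eT sg s c) t (dEfun k0 k1 km1 k2 eT s c t)).
        { intro t. apply energy_deriv; auto. }
        assert (PE : forall t, Efun k0 k1 km1 k2 eT sg s c (t + T) = Efun k0 k1 km1 k2 eT sg s c t).
        { intro t. unfold Efun. rewrite Ps, Pc. auto. }
        assert (Z : forall t, dEfun k0 k1 km1 k2 eT s c t = 0).
        { destruct Hsg as [->| ->].
          - apply (per_mono' _ _ T HT DE); auto. intros t. specialize (Hpos t).
            unfold dEfun. set (e := eT - c t) in *. set (w := k1 * s t - (km1 + k2) * c t / e).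
            assert (0 <= w^2/e) by (apply Rdiv_le_0_compat; [apply pow2_ge_0|lra]).
            assert (0 <= k1 * e^2 + (km1+k2)*eT) by (pose proof (pow2_ge_0 e); apply Rplus_le_le_0_compat; apply Rmult_le_pos; lra).
            nra.
          - refine (proj2 (per_mono _ _ T HT DE _ PE)). intros t. specialize (Hpos t).
            unfold dEfun. set (e := eT - c t) in *. set (w := k1 * s t - (km1 + k2) * c t / e).
            assert (0 <= w^2/(-e)) by (apply Rdiv_le_0_compat; [apply pow2_ge_0|lra]).
            replace (w^2/e) with (-(w^2/(-e))) by (field; lra).
            assert (0 <= k1 * e^2 + (km1+k2)*eT) by (pose proof (pow2_ge_0 e); apply Rplus_le_le_0_compat; apply Rmult_le_pos; lra).
            nra. }
        assert (F0 : forall t, fc k0 k1 km1 k2 eT (s t) (c t) = 0).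
        { intros t. specialize (Z t). specialize (Hpos t). unfold dEfun in Z.
          assert (He : eT - c t <> 0) by (intro E; rewrite E in Hpos; lra).
          set (e := eT - c t) in *. set (w := k1 * s t - (km1 + k2) * c t / e) in *.
          assert (Q : 0 < k1 * e^2 + (km1+k2)*eT).
          { assert (0 < e^2) by (apply pow2_gt_0; auto). 
            assert (0 < k1 * e^2) by (apply Rmult_lt_0_compat; lra).
            assert (0 <= (km1+k2)*eT) by (apply Rmult_le_pos; lra). lra. }
          assert (W2 : w^2/e = 0).
          { apply (Rmult_eq_reg_r (k1 * e^2 + (km1+k2)*eT)); lra. }
          assert (W : w = 0).
          { unfold Rdiv in W2. apply Rmult_integral in W2. destruct W2 as [W2|W2].
            - nra.
            - exfalso. apply (Rinv_neq_0_compat e He W2). }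
          unfold fc. replace (k1 * (eT - c t) * s t - (km1 + k2) * c t) with (e * w) by (unfold w, e; field; auto).
          rewrite W. ring. }
        destruct (per_mono c (fun t => fc k0 k1 km1 k2 eT (s t) (c t)) T HT) as [Cc' _].
        -- auto.
        -- intros t. rewrite F0. lra.
        -- auto.
        -- intros t. split; [|auto].
           assert (Sv : forall x, s x = (km1+k2) * c x / (k1 * (eT - c x))).
           { intros x. specialize (F0 x). specialize (Hpos x). unfold fc in F0.
             assert (He : eT - c x <> 0) by (intro E; rewrite E in Hpos; lra).
             field_simplify_eq; [|split; auto]. lra. }
           rewrite !Sv, Cc'. auto.
Qed.

Definition clip m x := let y := (x + m - Rabs (x - m))/2 in (y + Rabs y)/2.

Lemma clip_spec m x : 0 <= m ->
  (x <= 0 -> clip m x = 0) /\ (0 <= x <= m -> clip m x = x) /\ (m <= x -> clip m x = m) /\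
  0 <= clip m x <= m.
Proof.
  intros Hm. unfold clip.
  destruct (Rle_or_lt x m) as [H|H].
  - rewrite (Rabs_left1 (x - m)) by lra.
    replace ((x + m - - (x - m)) / 2) with x by field.
    destruct (Rle_or_lt 0 x) as [H0|H0].
    + rewrite Rabs_pos_eq by lra. repeat split; intros; lra.
    + rewrite Rabs_left by lra. repeat split; intros; lra.
  - rewrite (Rabs_pos_eq (x - m)) by lra.
    replace ((x + m - (x - m)) / 2) with m by field.
    rewrite Rabs_pos_eq by lra. repeat split; intros; lra.
Qed.

Lemma clip_lip m x y : 0 <= m -> Rabs (clip m x - clip m y) <= Rabs (x - y).
Proof.
  intros Hm. destruct (clip_spec m x Hm) as [A1 [A2 [A3 A4]]].
  destruct (clip_spec m y Hm) as [B1 [B2 [B3 B4]]].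
  destruct (Rle_or_lt x 0); destruct (Rle_or_lt x m); destruct (Rle_or_lt y 0); destruct (Rle_or_lt y m);
  try rewrite A1 by lra; try rewrite A2 by lra; try rewrite A3 by lra;
  try rewrite B1 by lra; try rewrite B2 by lra; try rewrite B3 by lra;
  unfold Rabs; repeat destruct Rcase_abs; lra.
Qed.

Lemma cP (f g : R -> R) x : continuous f x -> continuous g x -> continuous (fun t => f t + g t) x.
Proof. intros; apply (continuous_plus f g x); auto. Qed.
Lemma cMi (f g : R -> R) x : continuous f x -> continuous g x -> continuous (fun t => f t - g t) x.
Proof. intros; apply (continuous_minus f g x); auto. Qed.
Lemma cM (f g : R -> R) x : continuous f x -> continuous g x -> continuous (fun t => f t * g t) x.
Proof. intros; apply (continuous_mult f g x); auto. Qed.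
Lemma cC (a : R) x : continuous (fun _ : R => a) x.
Proof. apply continuous_const. Qed.
Lemma cI x : continuous (fun t : R => t) x.
Proof. apply continuous_id. Qed.
Lemma cA (f : R -> R) x : continuous f x -> continuous (fun t => Rabs (f t)) x.
Proof. intros; apply continuous_Rabs_comp; auto. Qed.
Lemma cO (f : R -> R) x : continuous f x -> continuous (fun t => - f t) x.
Proof. intros; apply (continuous_opp f x); auto. Qed.
Lemma cD (f : R -> R) x : continuous f x -> continuous (fun t => f t / 2) x.
Proof. intros. apply (cM f (fun _ => /2)); auto. apply cC. Qed.

Ltac cont := repeat match goal with
  | |- continuous (fun _ => ?c) ?x => apply (cC c x)
  | |- continuous (fun t => t) ?x => apply (cI x)
  | |- continuous (fun t => Rabs (@?f t)) ?x => apply (cA f x)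
  | |- continuous (fun t => - (@?f t)) ?x => apply (cO f x)
  | |- continuous (fun t => @?f t - @?g t) ?x => apply (cMi f g x)
  | |- continuous (fun t => @?f t + @?g t) ?x => apply (cP f g x)
  | |- continuous (fun t => @?f t * @?g t) ?x => apply (cM f g x)
  | |- continuous (fun t => @?f t / 2) ?x => apply (cD f x)
  | |- continuous ?f ?x => assumption
  end.

Lemma clip_cont (m f : R -> R) x : continuous m x -> continuous f x -> continuous (fun t => clip (m t) (f t)) x.
Proof. intros. unfold clip. cont. Qed.

Record prm := mkP { pk0 : R; pk1 : R; pkm1 : R; pk2 : R; peT : R; ps0 : R; pc0 : R }.
Definition nonneg p := 0 <= pk0 p /\ 0 <= pk1 p /\ 0 <= pkm1 p /\ 0 <= pk2 p /\ 0 <= peT p /\ 0 <= ps0 p /\ 0 <= pc0 p.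

Definition Mt p t := ps0 p + pc0 p + pk0 p * Rabs t + 1.
Definition Gs p t x y := fs (pk0 p) (pk1 p) (pkm1 p) (pk2 p) (peT p) (clip (Mt p t) x) (clip (Mt p t) y).
Definition Gc p t x y := fc (pk0 p) (pk1 p) (pkm1 p) (pk2 p) (peT p) (clip (Mt p t) x) (clip (Mt p t) y).

Lemma Mt_pos p t : nonneg p -> 0 <= Mt p t.
Proof.
  intros (?&?&?&?&?&?&?). unfold Mt. pose proof (Rabs_pos t).
  assert (0 <= pk0 p * Rabs t) by (apply Rmult_le_pos; lra). lra.
Qed.

Lemma G_cont p (a b : R -> R) x : continuous a x -> continuous b x ->
  continuous (fun u => Gs p u (a u) (b u)) x /\ continuous (fun u => Gc p u (a u) (b u)) x.
Proof.
  intros Ha Hb.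
  assert (Cm : continuous (fun u => Mt p u) x) by (unfold Mt; cont).
  assert (C1 : continuous (fun u => clip (Mt p u) (a u)) x) by (apply clip_cont; auto).
  assert (C2 : continuous (fun u => clip (Mt p u) (b u)) x) by (apply clip_cont; auto).
  unfold Gs, Gc, fs, fc. split; cont; auto.
Qed.

Definition ML p L := ps0 p + pc0 p + pk0 p * L + 1.
Definition BB p L := pk0 p + pk1 p * peT p * ML p L + pk1 p * ML p L ^ 2 + (pkm1 p + pk2 p) * ML p L.
Definition KK p L := pk1 p * peT p + pk1 p * ML p L + pkm1 p + pk2 p + 1.

Lemma clip_ML p L u x : nonneg p -> Rabs u <= L -> 0 <= clip (Mt p u) x <= ML p L.
Proof.
  intros Hp Hu. destruct (clip_spec (Mt p u) x (Mt_pos p u Hp)) as [_ [_ [_ B]]].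
  split; [lra|]. apply Rle_trans with (Mt p u); [lra|]. unfold Mt, ML.
  destruct Hp as (?&?&?&?&?&?&?). assert (pk0 p * Rabs u <= pk0 p * L) by (apply Rmult_le_compat_l; auto). lra.
Qed.

Lemma KK_pos p L : nonneg p -> 0 <= L -> 1 <= KK p L.
Proof.
  intros (?&?&?&?&?&?&?) HL. unfold KK, ML.
  assert (0 <= pk1 p * peT p) by (apply Rmult_le_pos; auto).
  assert (0 <= pk0 p * L) by (apply Rmult_le_pos; auto).
  assert (0 <= pk1 p * (ps0 p + pc0 p + pk0 p * L + 1)) by (apply Rmult_le_pos; lra). lra.
Qed.

Lemma BB_pos p L : nonneg p -> 0 <= L -> 0 <= BB p L.
Proof.
  intros Hp HL. pose proof Hp as (?&?&?&?&?&?&?). unfold BB.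
  assert (0 <= ML p L) by (unfold ML; assert (0 <= pk0 p * L) by (apply Rmult_le_pos; auto); lra).
  assert (0 <= pk1 p * peT p * ML p L) by (repeat apply Rmult_le_pos; auto).
  assert (0 <= pk1 p * ML p L ^ 2) by (apply Rmult_le_pos; auto; apply pow2_ge_0).
  assert (0 <= (pkm1 p + pk2 p) * ML p L) by (apply Rmult_le_pos; lra). lra.
Qed.

Lemma G_bound p L u x y : nonneg p -> Rabs u <= L ->
  Rabs (Gs p u x y) <= BB p L /\ Rabs (Gc p u x y) <= BB p L.
Proof.
  intros Hp Hu. pose proof (clip_ML p L u x Hp Hu) as [A1 A2]. pose proof (clip_ML p L u y Hp Hu) as [B1 B2].
  unfold Gs, Gc, fs, fc, BB. set (a := clip (Mt p u) x) in *. set (b := clip (Mt p u) y) in *.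
  set (m := ML p L) in *. destruct Hp as (?&?&?&?&?&?&?).
  set (k0 := pk0 p) in *. set (k1 := pk1 p) in *. set (km1 := pkm1 p) in *. set (k2 := pk2 p) in *. set (eT := peT p) in *.
  assert (0 <= a*b <= m^2) by (split; [apply Rmult_le_pos; auto| simpl; rewrite Rmult_1_r; apply Rmult_le_compat; auto]).
  assert (0 <= k1*(a*b) <= k1*m^2) by (split; [apply Rmult_le_pos; lra|apply Rmult_le_compat_l; lra]).
  assert (0 <= k1*eT) by (apply Rmult_le_pos; lra).
  assert (0 <= k1*eT*a <= k1*eT*m) by (split; [apply Rmult_le_pos; lra|apply Rmult_le_compat_l; lra]).
  assert (0 <= km1*b <= km1*m) by (split; [apply Rmult_le_pos; lra|apply Rmult_le_compat_l; lra]).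
  assert (0 <= k2*b <= k2*m) by (split; [apply Rmult_le_pos; lra|apply Rmult_le_compat_l; lra]).
  split; apply Rabs_le; split;
  replace (k1 * (eT - b) * a) with (k1*eT*a - k1*(a*b)) by ring; try lra.
Qed.

Lemma abs4 a b c d : Rabs (a + b + c + d) <= Rabs a + Rabs b + Rabs c + Rabs d.
Proof.
  eapply Rle_trans; [apply Rabs_triang|]. eapply Rle_trans; [apply Rplus_le_compat_r, Rabs_triang|].
  eapply Rle_trans; [apply Rplus_le_compat_r, Rplus_le_compat_r, Rabs_triang|]. lra.
Qed.

Lemma G_lip p L u x y x' y' : nonneg p -> Rabs u <= L ->
  Rabs (Gs p u x y - Gs p u x' y') <= KK p L * (Rabs (x - x') + Rabs (y - y')) /\
  Rabs (Gc p u x y - Gc p u x' y') <= KK p L * (Rabs (x - x') + Rabs (y - y')).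
Proof.
  intros Hp Hu. pose proof (clip_ML p L u x Hp Hu) as [A1 A2]. pose proof (clip_ML p L u y Hp Hu) as [B1 B2].
  pose proof (clip_ML p L u x' Hp Hu) as [A1' A2']. pose proof (clip_ML p L u y' Hp Hu) as [B1' B2'].
  pose proof (clip_lip (Mt p u) x x' (Mt_pos p u Hp)) as Lx.
  pose proof (clip_lip (Mt p u) y y' (Mt_pos p u Hp)) as Ly.
  unfold Gs, Gc, fs, fc, KK. set (a := clip (Mt p u) x) in *. set (b := clip (Mt p u) y) in *.
  set (a' := clip (Mt p u) x') in *. set (b' := clip (Mt p u) y') in *.
  set (m := ML p L) in *. destruct Hp as (?&?&?&?&?&?&?).
  set (k0 := pk0 p) in *. set (k1 := pk1 p) in *. set (km1 := pkm1 p) in *. set (k2 := pk2 p) in *. set (eT := peT p) in *.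
  set (da := Rabs (x - x')) in *. set (db := Rabs (y - y')) in *.
  assert (Hda : Rabs (a - a') <= da) by auto. assert (Hdb : Rabs (b - b') <= db) by auto.
  assert (Q1 : Rabs (k1*eT*(a - a')) <= k1*eT*da).
  { rewrite Rabs_mult, (Rabs_pos_eq (k1*eT)) by (apply Rmult_le_pos; auto). apply Rmult_le_compat_l; auto. apply Rmult_le_pos; auto. }
  assert (Q2 : Rabs (k1*a*(b - b')) <= k1*m*db).
  { rewrite Rabs_mult, (Rabs_pos_eq (k1*a)) by (apply Rmult_le_pos; auto). apply Rmult_le_compat; auto. apply Rmult_le_pos; auto. apply Rabs_pos. apply Rmult_le_compat_l; auto. }
  assert (Q3 : Rabs (k1*b'*(a - a')) <= k1*m*da).
  { rewrite Rabs_mult, (Rabs_pos_eq (k1*b')) by (apply Rmult_le_pos; auto). apply Rmult_le_compat; auto. apply Rmult_le_pos; auto. apply Rabs_pos. apply Rmult_le_compat_l; auto. }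
  assert (Q4 : Rabs (km1*(b - b')) <= km1*db).
  { rewrite Rabs_mult, (Rabs_pos_eq km1) by auto. apply Rmult_le_compat_l; auto. }
  assert (Q5 : Rabs ((km1+k2)*(b - b')) <= (km1+k2)*db).
  { rewrite Rabs_mult, (Rabs_pos_eq (km1+k2)) by lra. apply Rmult_le_compat_l; lra. }
  assert (0 <= da) by apply Rabs_pos. assert (0 <= db) by apply Rabs_pos.
  assert (0 <= k1*eT*db) by (repeat apply Rmult_le_pos; auto).
  assert (0 <= k1*m*db /\ 0 <= k1*m*da) by (split; repeat apply Rmult_le_pos; lra).
  assert (0 <= k2*da /\ 0 <= km1*da /\ 0 <= k2*db /\ 0 <= k1*eT*da) by (repeat split; repeat apply Rmult_le_pos; lra).
  split.
  - replace (k0 - k1 * (eT - b) * a + km1 * b - (k0 - k1 * (eT - b') * a' + km1 * b'))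
      with (-(k1*eT*(a - a')) + k1*a*(b - b') + k1*b'*(a - a') + km1*(b - b')) by ring.
    eapply Rle_trans; [apply abs4|]. rewrite Rabs_Ropp. nra.
  - replace (k1 * (eT - b) * a - (km1 + k2) * b - (k1 * (eT - b') * a' - (km1 + k2) * b'))
      with (k1*eT*(a - a') + -(k1*a*(b - b')) + -(k1*b'*(a - a')) + -((km1+k2)*(b - b'))) by ring.
    eapply Rle_trans; [apply abs4|]. rewrite !Rabs_Ropp. nra.
Qed.

Lemma exR (f : R -> R) a b : (forall z, Rmin a b <= z <= Rmax a b -> continuous f z) -> ex_RInt f a b.
Proof. intros H. apply (@ex_RInt_continuous R_CompleteNormedModule). auto. Qed.

Lemma FTC (g : R -> R) a : (forall x, continuous g x) ->
  forall t, is_derive (fun t => a + RInt g 0 t) t (g t).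
Proof.
  intros Hg t.
  assert (K : is_derive (fun t => RInt g 0 t) t (g t)).
  { apply (is_derive_RInt g _ 0); [|auto]. apply filter_forall. intros b.
    apply (@RInt_correct R_CompleteNormedModule). apply (@ex_RInt_continuous R_CompleteNormedModule). intros; auto. }
  pose proof (is_derive_plus (fun _ => a) (fun t => RInt g 0 t) t _ _ (is_derive_const a t) K) as K2.
  eapply D_val; [exact K2|]. simpl. unfold plus, zero; simpl. ring.
Qed.

Lemma cont_of_derive (f : R -> R) t l : is_derive f t l -> continuous f t.
Proof. intros H. apply (@ex_derive_continuous R_AbsRing R_NormedModule). exists l; auto. Qed.

Lemma int_pow_pos (C : R) n t : 0 <= t ->
  RInt (fun u => C * u ^ n) 0 t = C * t ^ S n / INR (S n).
Proof.
  intros Ht. apply is_RInt_unique.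
  assert (HS : INR (S n) <> 0) by (apply not_0_INR; lia).
  replace (C * t ^ S n / INR (S n)) with (minus (C * t ^ S n / INR (S n)) (C * 0 ^ S n / INR (S n))).
  2: { simpl. unfold minus, plus, opp; simpl. field; auto. }
  apply (is_RInt_derive (fun u => C * u ^ S n / INR (S n))).
  - intros x _. eapply D_val; [auto_derive; [auto|reflexivity]|].
    change (match n with 0%nat => 1 | S _ => INR n + 1 end) with (INR (S n)). field; auto.
  - intros x _. apply (cont_of_derive _ x (C * INR n * x ^ pred n)). auto_derive; auto. ring.
Qed.

Lemma int_pow_neg (C : R) n t : t <= 0 ->
  RInt (fun u => C * (-u) ^ n) t 0 = C * (-t) ^ S n / INR (S n).
Proof.
  intros Ht. apply is_RInt_unique.
  assert (HS : INR (S n) <> 0) by (apply not_0_INR; lia).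
  replace (C * (-t) ^ S n / INR (S n)) with (minus (- (C * (-0) ^ S n / INR (S n))) (- (C * (-t) ^ S n / INR (S n)))).
  2: { simpl. unfold minus, plus, opp; simpl. field; auto. }
  apply (is_RInt_derive (fun u => - (C * (-u) ^ S n / INR (S n)))).
  - intros x _. eapply D_val; [auto_derive; [auto|reflexivity]|].
    change (match n with 0%nat => 1 | S _ => INR n + 1 end) with (INR (S n)). field; auto.
  - intros x _. apply (cont_of_derive _ x (- C * INR n * (-x) ^ pred n)). auto_derive; auto. ring.
Qed.

Lemma IB (f : R -> R) (C : R) n t : (forall u, continuous f u) ->
  (forall u, Rabs u <= Rabs t -> Rabs (f u) <= C * Rabs u ^ n) ->
  Rabs (RInt f 0 t) <= C * Rabs t ^ S n / INR (S n).
Proof.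
  intros Hc Hb.
  assert (Ex : forall a b, ex_RInt f a b) by (intros; apply exR; intros; auto).
  assert (ExA : forall a b, ex_RInt (fun u => Rabs (f u)) a b)
    by (intros; apply exR; intros; apply continuous_Rabs_comp; auto).
  destruct (Rle_or_lt 0 t) as [Ht|Ht].
  - rewrite (Rabs_pos_eq t) by auto. rewrite <- int_pow_pos by auto.
    eapply Rle_trans; [apply abs_RInt_le; auto|].
    apply RInt_le; auto.
    + apply exR. intros. apply (cont_of_derive _ _ (C * INR n * z ^ pred n)). auto_derive; auto. ring.
    + intros x Hx. replace (C * x ^ n) with (C * Rabs x ^ n) by (rewrite Rabs_pos_eq; lra). apply Hb. rewrite !Rabs_pos_eq; lra.
  - rewrite (Rabs_left t) by auto. rewrite <- int_pow_neg by lra.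
    rewrite <- opp_RInt_swap by auto. unfold opp; simpl. rewrite Rabs_Ropp.
    eapply Rle_trans; [apply abs_RInt_le; auto; lra|].
    apply RInt_le; auto; [lra| |].
    + apply exR. intros. apply (cont_of_derive _ _ (- C * INR n * (-z) ^ pred n)). auto_derive; auto. ring.
    + intros x Hx. replace (C * (-x) ^ n) with (C * Rabs x ^ n) by (rewrite Rabs_left; lra). apply Hb. rewrite !Rabs_left; lra.
Qed.

Fixpoint pic p n : (R -> R) * (R -> R) :=
  match n with
  | O => (fun _ => ps0 p, fun _ => pc0 p)
  | S n => let q := pic p n in
     (fun t => ps0 p + RInt (fun u => Gs p u (fst q u) (snd q u)) 0 t,
      fun t => pc0 p + RInt (fun u => Gc p u (fst q u) (snd q u)) 0 t)
  end.
Definition PS p n := fst (pic p n).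
Definition PC p n := snd (pic p n).

Lemma PS_S p n t : PS p (S n) t = ps0 p + RInt (fun u => Gs p u (PS p n u) (PC p n u)) 0 t.
Proof. reflexivity. Qed.
Lemma PC_S p n t : PC p (S n) t = pc0 p + RInt (fun u => Gc p u (PS p n u) (PC p n u)) 0 t.
Proof. reflexivity. Qed.

Lemma pic_cont p n : forall x, continuous (PS p n) x /\ continuous (PC p n) x.
Proof.
  induction n as [|n IH]; intros x.
  - split; apply continuous_const.
  - assert (Cg : forall y, continuous (fun u => Gs p u (PS p n u) (PC p n u)) y /\
                           continuous (fun u => Gc p u (PS p n u) (PC p n u)) y)
      by (intro y; exact (G_cont p _ _ y (proj1 (IH y)) (proj2 (IH y)))).
    split.
    + apply (cont_of_derive _ _ _ (FTC _ (ps0 p) (fun y => proj1 (Cg y)) x)).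
    + apply (cont_of_derive _ _ _ (FTC _ (pc0 p) (fun y => proj2 (Cg y)) x)).
Qed.

Lemma gS_cont p n y : continuous (fun u => Gs p u (PS p n u) (PC p n u)) y.
Proof. exact (proj1 (G_cont p _ _ y (proj1 (pic_cont p n y)) (proj2 (pic_cont p n y)))). Qed.
Lemma gC_cont p n y : continuous (fun u => Gc p u (PS p n u) (PC p n u)) y.
Proof. exact (proj2 (G_cont p _ _ y (proj1 (pic_cont p n y)) (proj2 (pic_cont p n y)))). Qed.

Lemma RInt_diff (f g : R -> R) t : (forall u, continuous f u) -> (forall u, continuous g u) ->
  RInt f 0 t - RInt g 0 t = RInt (fun u => f u - g u) 0 t.
Proof.
  intros Hf Hg. symmetry. apply (RInt_minus f g); apply exR; intros; auto.
Qed.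

Lemma diff_bound p L n : nonneg p -> 0 <= L -> forall t, Rabs t <= L ->
  Rabs (PS p (S n) t - PS p n t) + Rabs (PC p (S n) t - PC p n t) <=
  2 * BB p L * (2 * KK p L)^n * Rabs t ^ (S n) / INR (fact (S n)).
Proof.
  intros Hp HL. pose proof (BB_pos p L Hp HL) as HB. pose proof (KK_pos p L Hp HL) as HK.
  induction n as [|n IH]; intros t Ht.
  - rewrite PS_S, PC_S. simpl PS. simpl PC.
    assert (E : forall a x : R, a + x - a = x) by (intros; ring). rewrite !E.
    pose proof (IB (fun u => Gs p u (ps0 p) (pc0 p)) (BB p L) 0 t (gS_cont p 0)) as I1.
    pose proof (IB (fun u => Gc p u (ps0 p) (pc0 p)) (BB p L) 0 t (gC_cont p 0)) as I2.
    simpl in I1, I2. 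
    assert (A : forall u, Rabs u <= Rabs t -> Rabs (Gs p u (ps0 p) (pc0 p)) <= BB p L * 1 /\ Rabs (Gc p u (ps0 p) (pc0 p)) <= BB p L * 1).
    { intros u Hu. rewrite Rmult_1_r. apply G_bound; auto; lra. }
    specialize (I1 (fun u Hu => proj1 (A u Hu))). specialize (I2 (fun u Hu => proj2 (A u Hu))).
    simpl. simpl in I1, I2.
    change (fun u : R => Gs p u (PS p 0 u) (PC p 0 u)) with (fun u : R => Gs p u (ps0 p) (pc0 p)).
    change (fun u : R => Gc p u (PS p 0 u) (PC p 0 u)) with (fun u : R => Gc p u (ps0 p) (pc0 p)).
    rewrite Rdiv_1_r in *. lra.
  - rewrite (PS_S p (S n)), (PS_S p n), (PC_S p (S n)), (PC_S p n).
    set (C := KK p L * (2 * BB p L * (2 * KK p L)^n / INR (fact (S n)))).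
    assert (Hg : forall u, Rabs u <= Rabs t ->
       Rabs (Gs p u (PS p (S n) u) (PC p (S n) u) - Gs p u (PS p n u) (PC p n u)) <= C * Rabs u ^ S n /\
       Rabs (Gc p u (PS p (S n) u) (PC p (S n) u) - Gc p u (PS p n u) (PC p n u)) <= C * Rabs u ^ S n).
    { intros u Hu. destruct (G_lip p L u (PS p (S n) u) (PC p (S n) u) (PS p n u) (PC p n u) Hp ltac:(lra)) as [L1 L2].
      specialize (IH u ltac:(lra)).
      assert (KK p L * (Rabs (PS p (S n) u - PS p n u) + Rabs (PC p (S n) u - PC p n u)) <= C * Rabs u ^ S n).
      { unfold C. replace (KK p L * (2 * BB p L * (2 * KK p L) ^ n / INR (fact (S n))) * Rabs u ^ S n)
          with (KK p L * (2 * BB p L * (2 * KK p L) ^ n * Rabs u ^ S n / INR (fact (S n)))) by (field; apply INR_fact_neq_0).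
        apply Rmult_le_compat_l; lra. }
      split; lra. }
    assert (E : forall a x y : R, a + x - (a + y) = x - y) by (intros; ring). rewrite !E.
    rewrite RInt_diff; [ | exact (gS_cont p (S n)) | exact (gS_cont p n)].
    rewrite RInt_diff; [ | exact (gC_cont p (S n)) | exact (gC_cont p n)].
    pose proof (IB _ C (S n) t ltac:(intros; apply cMi; apply gS_cont) (fun u Hu => proj1 (Hg u Hu))) as I1.
    pose proof (IB _ C (S n) t ltac:(intros; apply cMi; apply gC_cont) (fun u Hu => proj2 (Hg u Hu))) as I2.
    eapply Rle_trans; [apply Rplus_le_compat; [exact I1|exact I2]|].
    right. unfold C. 
    replace (fact (S (S n))) with (S (S n) * fact (S n))%nat by reflexivity.
    rewrite mult_INR. simpl pow. field. split; [apply INR_fact_neq_0| apply not_0_INR; lia].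
Qed.

Lemma exs_ext (a b : nat -> R) : (forall n, a n = b n) -> ex_series a -> ex_series b.
Proof. intros H [l Hl]. exists l. apply (is_series_ext a b l H Hl). Qed.

Lemma exs_le (a b : nat -> R) : (forall n, Rabs (a n) <= b n) -> ex_series b -> ex_series a.
Proof. intros H Hb. apply (@ex_series_le R_AbsRing R_CompleteNormedModule a b); auto. Qed.

Lemma exs_shift (a : nat -> R) m : ex_series a -> ex_series (fun k => a (m + k)%nat).
Proof. intros H. apply (@ex_series_incr_n R_AbsRing R_NormedModule a m). auto. Qed.

Lemma ex_exp x : ex_series (fun n => x^n / INR (fact n)).
Proof.
  pose proof (is_exp_Reals x) as H. exists (exp x).
  eapply is_series_ext; [|exact H]. intros n. simpl. rewrite pow_n_pow. unfold scal; simpl. unfold mult; simpl.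
  unfold Rdiv. ring.
Qed.

Definition aL p L n := 2 * BB p L * (2 * KK p L)^n * L ^ (S n) / INR (fact (S n)).

Lemma aL_ex p L : nonneg p -> 0 <= L -> ex_series (aL p L).
Proof.
  intros Hp HL. pose proof (KK_pos p L Hp HL) as HK.
  set (x := 2 * KK p L * L).
  assert (E1 : ex_series (fun n => x^(S n) / INR (fact (S n)))).
  { apply (@ex_series_incr_1 R_AbsRing R_NormedModule (fun n => x^n / INR (fact n))). apply ex_exp. }
  apply exs_ext with (fun n => (BB p L / KK p L) * (x^(S n) / INR (fact (S n)))).
  - intros n. unfold aL, x. rewrite Rpow_mult_distr. simpl pow. field. split; [apply INR_fact_neq_0|lra].
  - apply exs_ext with (fun n => scal (BB p L / KK p L) (x^(S n) / INR (fact (S n)))); [reflexivity|].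
    apply (@ex_series_scal_l R_AbsRing R_NormedModule). auto.
Qed.

Lemma aL_pos p L n : nonneg p -> 0 <= L -> 0 <= aL p L n.
Proof.
  intros Hp HL. pose proof (KK_pos p L Hp HL). pose proof (BB_pos p L Hp HL). unfold aL.
  apply Rdiv_le_0_compat; [|apply lt_0_INR, lt_O_fact].
  repeat apply Rmult_le_pos; try lra; apply pow_le; lra.
Qed.

Lemma tail_small (a : nat -> R) : ex_series a -> forall eta, 0 < eta ->
  exists N, forall n, (N <= n)%nat -> Rabs (Series (fun k => a (n + k)%nat)) < eta.
Proof.
  intros Ha eta He.
  pose proof (Series_correct a Ha) as Hs. unfold is_series in Hs.
  assert (Hl : is_lim_seq (fun m => sum_n a m) (Series a)) by exact Hs.
  apply is_lim_seq_spec in Hl. destruct (Hl (mkposreal eta He)) as [N0 HN0].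
  exists (S N0). intros n Hn.
  rewrite (Series_incr_n a n) in HN0 by (auto; lia).
  specialize (HN0 (pred n) ltac:(lia)). simpl in HN0.
  rewrite sum_n_Reals in HN0. 
  replace (Series (fun k => a (n + k)%nat)) with
    (-(sum_f_R0 a (pred n) - (sum_f_R0 a (pred n) + Series (fun k => a (n + k)%nat)))) by ring.
  rewrite Rabs_Ropp. auto.
Qed.

Lemma cont_eps (f : R -> R) x : continuous f x -> forall eps, 0 < eps ->
  exists d, 0 < d /\ forall y, Rabs (y - x) < d -> Rabs (f y - f x) < eps.
Proof.
  intros H eps He. apply continuity_pt_filterlim in H.
  destruct (H eps ltac:(lra)) as [d [Hd Hy]].
  exists d. split; [lra|]. intros y Hyx.
  destruct (Req_dec y x) as [->|Ne].
  - rewrite Rminus_diag, Rabs_R0. auto.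
  - apply (Hy y). split; [split; [exact I|auto]|]. simpl. unfold R_dist. auto.
Qed.

Lemma eps_cont (f : R -> R) x : (forall eps, 0 < eps ->
  exists d, 0 < d /\ forall y, Rabs (y - x) < d -> Rabs (f y - f x) < eps) -> continuous f x.
Proof.
  intros H. apply continuity_pt_filterlim. intros eps He.
  destruct (H eps ltac:(lra)) as [d [Hd Hy]]. exists d. split; [lra|].
  intros y [_ Hyx]. simpl in *. unfold R_dist in *. auto.
Qed.

Definition DS p n t := PS p (S n) t - PS p n t.
Definition DC p n t := PC p (S n) t - PC p n t.
Definition Sinf p t := ps0 p + Series (fun n => DS p n t).
Definition Cinf p t := pc0 p + Series (fun n => DC p n t).
Definition eps p L n := Series (fun k => aL p L (S n + k)).

Lemma tele p t n : PS p (S n) t = ps0 p + sum_f_R0 (fun k => DS p k t) n /\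
                   PC p (S n) t = pc0 p + sum_f_R0 (fun k => DC p k t) n.
Proof.
  induction n as [|n [IH1 IH2]].
  - unfold DS, DC; simpl sum_f_R0. change (PS p 0 t) with (ps0 p). change (PC p 0 t) with (pc0 p). split; ring.
  - simpl sum_f_R0. rewrite <- Rplus_assoc, <- Rplus_assoc, <- IH1, <- IH2. unfold DS, DC. split; ring.
Qed.

Lemma D_bound p L n t : nonneg p -> 0 <= L -> Rabs t <= L ->
  Rabs (DS p n t) <= aL p L n /\ Rabs (DC p n t) <= aL p L n.
Proof.
  intros Hp HL Ht. pose proof (diff_bound p L n Hp HL t Ht) as H.
  assert (2 * BB p L * (2 * KK p L) ^ n * Rabs t ^ S n / INR (fact (S n)) <= aL p L n).
  { unfold aL. apply Rmult_le_compat_r; [left; apply Rinv_0_lt_compat, lt_0_INR, lt_O_fact|].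
    apply Rmult_le_compat_l.
    - pose proof (KK_pos p L Hp HL). pose proof (BB_pos p L Hp HL).
      repeat apply Rmult_le_pos; try lra. apply pow_le; lra.
    - apply pow_incr. split; auto. apply Rabs_pos. }
  unfold DS, DC. pose proof (Rabs_pos (PS p (S n) t - PS p n t)). pose proof (Rabs_pos (PC p (S n) t - PC p n t)).
  split; lra.
Qed.

Lemma err_bound p L n t : nonneg p -> 0 <= L -> Rabs t <= L ->
  Rabs (Sinf p t - PS p (S n) t) <= eps p L n /\ Rabs (Cinf p t - PC p (S n) t) <= eps p L n.
Proof.
  intros Hp HL Ht. pose proof (aL_ex p L Hp HL) as Ea.
  assert (Ea' : ex_series (fun k => aL p L (S n + k))) by (apply exs_shift; auto).
  assert (G : forall D : nat -> R, (forall k, Rabs (D k) <= aL p L k) ->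
     Rabs (Series D - sum_f_R0 D n) <= eps p L n).
  { intros D HD. assert (ED : ex_series D) by (apply (exs_le D (aL p L)); auto).
    rewrite (Series_incr_n D (S n)) by (auto; lia). simpl pred.
    replace (sum_f_R0 D n + Series (fun k => D (S n + k)%nat) - sum_f_R0 D n) with (Series (fun k => D (S n + k)%nat)) by ring.
    assert (EA : ex_series (fun k => Rabs (D (S n + k)%nat))).
    { apply (exs_le _ (fun k => aL p L (S n + k))); auto. intros k. rewrite Rabs_Rabsolu. auto. }
    eapply Rle_trans; [apply Series_Rabs; auto|].
    apply Series_le; auto. intros k. split; [apply Rabs_pos|auto]. }
  destruct (tele p t n) as [T1 T2]. unfold Sinf, Cinf. rewrite T1, T2.
  replace (ps0 p + Series (fun n0 : nat => DS p n0 t) - (ps0 p + sum_f_R0 (fun k : nat => DS p k t) n))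
    with (Series (fun n0 : nat => DS p n0 t) - sum_f_R0 (fun k : nat => DS p k t) n) by ring.
  replace (pc0 p + Series (fun n0 : nat => DC p n0 t) - (pc0 p + sum_f_R0 (fun k : nat => DC p k t) n))
    with (Series (fun n0 : nat => DC p n0 t) - sum_f_R0 (fun k : nat => DC p k t) n) by ring.
  split; apply G; intros k; apply (D_bound p L k t Hp HL Ht).
Qed.

Lemma eps_small p L : nonneg p -> 0 <= L -> forall eta, 0 < eta ->
  exists N, forall n, (N <= n)%nat -> eps p L n < eta.
Proof.
  intros Hp HL eta He. destruct (tail_small (aL p L) (aL_ex p L Hp HL) eta He) as [N HN].
  exists N. intros n Hn. specialize (HN (S n) ltac:(lia)). unfold eps.
  eapply Rle_lt_trans; [apply Rle_abs|exact HN].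
Qed.

Lemma abs3 a b c : Rabs (a + b - c) <= Rabs a + Rabs b + Rabs c.
Proof. unfold Rabs; repeat destruct Rcase_abs; lra. Qed.

Lemma inf_cont p x : nonneg p -> continuous (Sinf p) x /\ continuous (Cinf p) x.
Proof.
  intros Hp. set (L := Rabs x + 1). assert (HL : 0 <= L) by (unfold L; pose proof (Rabs_pos x); lra).
  split; apply eps_cont; intros e He;
  destruct (eps_small p L Hp HL (e/3) ltac:(lra)) as [N HN]; specialize (HN N (le_n N));
  [destruct (cont_eps _ x (proj1 (pic_cont p (S N) x)) (e/3) ltac:(lra)) as [d [Hd Hy]]
  |destruct (cont_eps _ x (proj2 (pic_cont p (S N) x)) (e/3) ltac:(lra)) as [d [Hd Hy]]];
  exists (Rmin d 1); (split; [apply Rmin_pos; lra|]); intros y Hyx;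
  assert (Hy1 : Rabs y <= L) by (unfold L; pose proof (Rmin_r d 1); pose proof (Rabs_triang_inv y x); lra);
  assert (Hx1 : Rabs x <= L) by (unfold L; lra);
  specialize (Hy y ltac:(pose proof (Rmin_l d 1); lra));
  destruct (err_bound p L N y Hp HL Hy1) as [E1 E2]; destruct (err_bound p L N x Hp HL Hx1) as [F1 F2].
  - replace (Sinf p y - Sinf p x) with ((Sinf p y - PS p (S N) y) + (PS p (S N) y - PS p (S N) x) - (Sinf p x - PS p (S N) x)) by ring.
    eapply Rle_lt_trans; [apply abs3|]. lra.
  - replace (Cinf p y - Cinf p x) with ((Cinf p y - PC p (S N) y) + (PC p (S N) y - PC p (S N) x) - (Cinf p x - PC p (S N) x)) by ring.
    eapply Rle_lt_trans; [apply abs3|]. lra.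
Qed.

Definition gI p u := Gs p u (Sinf p u) (Cinf p u).
Definition hI p u := Gc p u (Sinf p u) (Cinf p u).

Lemma gI_cont p x : nonneg p -> continuous (gI p) x /\ continuous (hI p) x.
Proof.
  intros Hp. exact (G_cont p _ _ x (proj1 (inf_cont p x Hp)) (proj2 (inf_cont p x Hp))).
Qed.

Lemma zero_small X C : 0 <= C -> (forall eta, 0 < eta -> Rabs X <= C * eta) -> X = 0.
Proof.
  intros HC H. destruct (Req_dec X 0) as [|N]; auto. exfalso.
  pose proof (Rabs_pos_lt X N).
  specialize (H (Rabs X / (2 * (C + 1))) ltac:(apply Rdiv_lt_0_compat; lra)).
  assert (C * (Rabs X / (2 * (C + 1))) < Rabs X).
  { replace (C * (Rabs X / (2 * (C + 1)))) with (Rabs X * (C / (2 * (C+1)))) by (field; lra).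
    assert (C / (2 * (C+1)) < 1) by (apply Rmult_lt_reg_r with (2*(C+1)); [lra|]; unfold Rdiv; rewrite Rmult_assoc, Rinv_l by lra; lra).
    nra. }
  lra.
Qed.

Lemma inteq p t : nonneg p ->
  Sinf p t = ps0 p + RInt (gI p) 0 t /\ Cinf p t = pc0 p + RInt (hI p) 0 t.
Proof.
  intros Hp. set (L := Rabs t). assert (HL : 0 <= L) by apply Rabs_pos.
  pose proof (KK_pos p L Hp HL) as HK.
  assert (Key : forall eta, 0 < eta ->
     Rabs (Sinf p t - (ps0 p + RInt (gI p) 0 t)) <= (1 + 2 * KK p L * L) * eta /\
     Rabs (Cinf p t - (pc0 p + RInt (hI p) 0 t)) <= (1 + 2 * KK p L * L) * eta).
  { intros eta He. destruct (eps_small p L Hp HL eta He) as [N HN].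
    pose proof (HN N (le_n N)) as H1. pose proof (HN (S N) (le_S _ _ (le_n N))) as H2.
    destruct (err_bound p L (S N) t Hp HL (Rle_refl _)) as [E1 E2].
    assert (Bd : forall u, Rabs u <= L ->
       Rabs (Gs p u (PS p (S N) u) (PC p (S N) u) - gI p u) <= (KK p L * (2 * eta)) * Rabs u ^ 0 /\
       Rabs (Gc p u (PS p (S N) u) (PC p (S N) u) - hI p u) <= (KK p L * (2 * eta)) * Rabs u ^ 0).
    { intros u Hu. destruct (err_bound p L N u Hp HL Hu) as [F1 F2].
      destruct (G_lip p L u (PS p (S N) u) (PC p (S N) u) (Sinf p u) (Cinf p u) Hp Hu) as [L1 L2].
      rewrite Rabs_minus_sym in F1, F2. simpl pow. rewrite Rmult_1_r.
      assert (KK p L * (Rabs (PS p (S N) u - Sinf p u) + Rabs (PC p (S N) u - Cinf p u)) <= KK p L * (2 * eta))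
        by (apply Rmult_le_compat_l; lra).
      unfold gI, hI. split; lra. }
    pose proof (IB _ (KK p L * (2 * eta)) 0 t ltac:(intros; apply cMi; [apply gS_cont | apply (proj1 (gI_cont p u Hp))])
                 (fun u Hu => proj1 (Bd u Hu))) as I1.
    pose proof (IB _ (KK p L * (2 * eta)) 0 t ltac:(intros; apply cMi; [apply gC_cont | apply (proj2 (gI_cont p u Hp))])
                 (fun u Hu => proj2 (Bd u Hu))) as I2.
    rewrite <- RInt_diff in I1; [| exact (gS_cont p (S N)) | exact (fun u => proj1 (gI_cont p u Hp))].
    rewrite <- RInt_diff in I2; [| exact (gC_cont p (S N)) | exact (fun u => proj2 (gI_cont p u Hp))].
    simpl in I1, I2. rewrite Rmult_1_r, Rdiv_1_r in I1, I2. fold L in I1, I2.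
    rewrite PS_S in E1. rewrite PC_S in E2.
    assert (E : forall a b c e : R, a - (b + e) = (a - (b + c)) + (c - e)) by (intros; ring).
    replace ((1 + 2 * KK p L * L) * eta) with (eta + KK p L * (2 * eta) * L) by ring.
    split.
    - rewrite (E (Sinf p t) (ps0 p) (RInt (fun u => Gs p u (PS p (S N) u) (PC p (S N) u)) 0 t)).
      eapply Rle_trans; [apply Rabs_triang|]. lra.
    - rewrite (E (Cinf p t) (pc0 p) (RInt (fun u => Gc p u (PS p (S N) u) (PC p (S N) u)) 0 t)).
      eapply Rle_trans; [apply Rabs_triang|]. lra. }
  split; [apply Rminus_diag_uniq | apply Rminus_diag_uniq];
  apply (zero_small _ (1 + 2 * KK p L * L)); try (assert (0 <= KK p L * L) by (apply Rmult_le_pos; lra); lra);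
  intros eta He; apply (Key eta He).
Qed.

Lemma inf_deriv p t : nonneg p ->
  is_derive (Sinf p) t (gI p t) /\ is_derive (Cinf p) t (hI p t).
Proof.
  intros Hp. split.
  - apply (is_derive_ext (fun t => ps0 p + RInt (gI p) 0 t)).
    + intros; symmetry; apply inteq; auto.
    + apply FTC. intros; apply gI_cont; auto.
  - apply (is_derive_ext (fun t => pc0 p + RInt (hI p) 0 t)).
    + intros; symmetry; apply inteq; auto.
    + apply FTC. intros; apply gI_cont; auto.
Qed.

Lemma inf_init p : nonneg p -> Sinf p 0 = ps0 p /\ Cinf p 0 = pc0 p.
Proof.
  intros Hp. destruct (inteq p 0 Hp) as [A B]. rewrite A, B, !RInt_point. unfold zero; simpl. split; ring.
Qed.

Lemma negpos a b : a <= 0 -> 0 <= b -> a * b <= 0.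
Proof. intros. nra. Qed.

Lemma inf_pos p t : nonneg p -> 0 <= t -> 0 <= Sinf p t /\ 0 <= Cinf p t.
Proof.
  intros Hp Ht. pose proof Hp as (h0&h1&hm1&h2&hT&hs&hc).
  set (phi := fun x => negsq (Sinf p x) + negsq (Cinf p x)).
  assert (Z : phi t = 0).
  { apply (gronwall phi
      (fun x => 2 * Rmin (Sinf p x) 0 * gI p x + 2 * Rmin (Cinf p x) 0 * hI p x)
      (fun x => 0) 0 t); try lra.
    - intros x Hx. destruct (inf_deriv p x Hp) as [D1 D2].
      unfold phi. apply (is_derive_plus (fun x => negsq (Sinf p x)) (fun x => negsq (Cinf p x))).
      + apply negsq_comp; auto.
      + apply negsq_comp; auto.
    - intros x Hx. apply continuity_pt_const. intros ? ?; auto.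
    - intros x Hx. rewrite Rmult_0_l. unfold gI, hI, Gs, Gc, fs, fc.
      pose proof (Mt_pos p x Hp) as HM.
      destruct (clip_spec (Mt p x) (Sinf p x) HM) as [A1 [A2 [A3 A4]]].
      destruct (clip_spec (Mt p x) (Cinf p x) HM) as [B1 [B2 [B3 B4]]].
      set (a := clip (Mt p x) (Sinf p x)) in *. set (b := clip (Mt p x) (Cinf p x)) in *.
      assert (T1 : 2 * Rmin (Sinf p x) 0 * (pk0 p - pk1 p * (peT p - b) * a + pkm1 p * b) <= 0).
      { destruct (Rle_or_lt 0 (Sinf p x)) as [P|P].
        - rewrite Rmin_right by lra. lra.
        - rewrite Rmin_left by lra. rewrite A1 by lra.
          assert (Q : 0 <= pk0 p + pkm1 p * b) by (assert (0 <= pkm1 p * b) by (apply Rmult_le_pos; lra); lra).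
          replace (2 * Sinf p x * (pk0 p - pk1 p * (peT p - b) * 0 + pkm1 p * b)) with ((2 * Sinf p x) * (pk0 p + pkm1 p * b)) by ring.
          apply negpos; lra. }
      assert (T2 : 2 * Rmin (Cinf p x) 0 * (pk1 p * (peT p - b) * a - (pkm1 p + pk2 p) * b) <= 0).
      { destruct (Rle_or_lt 0 (Cinf p x)) as [P|P].
        - rewrite Rmin_right by lra. lra.
        - rewrite Rmin_left by lra. rewrite B1 by lra.
          assert (Q : 0 <= pk1 p * (peT p - 0) * a) by (apply Rmult_le_pos; [apply Rmult_le_pos|]; lra).
          replace (2 * Cinf p x * (pk1 p * (peT p - 0) * a - (pkm1 p + pk2 p) * 0)) with ((2 * Cinf p x) * (pk1 p * (peT p - 0) * a)) by ring.
          apply negpos; lra. }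
      lra.
    - intros x Hx. unfold phi. pose proof (negsq_ge0 (Sinf p x)); pose proof (negsq_ge0 (Cinf p x)); lra.
    - unfold phi. destruct (inf_init p Hp) as [-> ->]. rewrite !negsq_of_nonneg by auto. ring. }
  unfold phi in Z. pose proof (negsq_ge0 (Sinf p t)); pose proof (negsq_ge0 (Cinf p t)).
  split; apply negsq_zero; lra.
Qed.

Lemma inf_sum p t : nonneg p -> 0 <= t -> Sinf p t + Cinf p t <= ps0 p + pc0 p + pk0 p * t.
Proof.
  intros Hp Ht. pose proof Hp as (h0&h1&hm1&h2&hT&hs&hc).
  set (psi := fun x => Sinf p x + Cinf p x - pk0 p * x).
  assert (Dpsi : forall x, is_derive psi x (gI p x + hI p x - pk0 p)).
  { intros x. destruct (inf_deriv p x Hp) as [D1 D2]. unfold psi.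
    assert (Dk : is_derive (fun x => pk0 p * x) x (pk0 p)) by (auto_derive; [auto|ring]).
    pose proof (is_derive_plus (Sinf p) (Cinf p) x _ _ D1 D2) as K1.
    pose proof (is_derive_minus _ _ x _ _ K1 Dk) as K.
    eapply D_val; [exact K|]. simpl. unfold minus, plus, opp; simpl. ring. }
  destruct (MVT_gen psi 0 t (fun x => gI p x + hI p x - pk0 p)) as [xi [Hxi E]].
  - intros x _; auto.
  - intros x _; eapply deriv_cont; apply Dpsi.
  - assert (gI p xi + hI p xi - pk0 p <= 0).
    { unfold gI, hI, Gs, Gc, fs, fc. pose proof (Mt_pos p xi Hp) as HM.
      destruct (clip_spec (Mt p xi) (Cinf p xi) HM) as [_ [_ [_ B4]]].
      assert (0 <= pk2 p * clip (Mt p xi) (Cinf p xi)) by (apply Rmult_le_pos; lra). lra. }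
    unfold psi in E. destruct (inf_init p Hp) as [S0 C0]. rewrite S0, C0 in E.
    rewrite Rmult_0_r in E. nra.
Qed.

Lemma inf_solution p : nonneg p ->
  is_solution_on (pk0 p) (pk1 p) (pkm1 p) (pk2 p) (peT p) (Sinf p) (Cinf p) (fun t => 0 <= t).
Proof.
  intros Hp t Ht. pose proof Hp as (h0&h1&hm1&h2&hT&hs&hc).
  destruct (inf_pos p t Hp Ht) as [P1 P2]. pose proof (inf_sum p t Hp Ht) as Sm.
  assert (HM : Sinf p t <= Mt p t /\ Cinf p t <= Mt p t).
  { unfold Mt. rewrite Rabs_pos_eq by auto. lra. }
  pose proof (Mt_pos p t Hp) as HM0.
  destruct (clip_spec (Mt p t) (Sinf p t) HM0) as [_ [A2 _]].
  destruct (clip_spec (Mt p t) (Cinf p t) HM0) as [_ [B2 _]].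
  destruct (inf_deriv p t Hp) as [D1 D2]. unfold gI, hI, Gs, Gc in D1, D2.
  rewrite A2, B2 in D1, D2 by lra. split; auto.
Qed.

Lemma existence k0 k1 km1 k2 eT (h0 : 0 <= k0) (h1 : 0 <= k1) (hm1 : 0 <= km1) (h2 : 0 <= k2) (hT : 0 <= eT) :
  forall s0 c0, first_quadrant (s0, c0) ->
     exists s c : R -> R, s 0 = s0 /\ c 0 = c0 /\
       is_solution_on k0 k1 km1 k2 eT s c (fun t => 0 <= t).
Proof.
  intros s0 c0 [Hs Hc]. simpl in Hs, Hc.
  set (p := mkP k0 k1 km1 k2 eT s0 c0).
  assert (Hp : nonneg p) by (unfold nonneg; simpl; repeat split; auto).
  exists (Sinf p), (Cinf p). destruct (inf_init p Hp) as [A B].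
  split; [exact A|split; [exact B|]]. apply (inf_solution p Hp).
Qed.

Lemma P0_props k0 k1 km1 k2 eT (h0 : 0 <= k0) (h1 : 0 <= k1) (hm1 : 0 <= km1) (h2 : 0 <= k2) (hT : 0 <= eT) :
  k1 <> 0 -> k2 <> 0 -> k2 * eT - k0 <> 0 ->
     (first_quadrant (P0 k0 k1 km1 k2 eT) <-> k2 * eT - k0 > 0) /\
     (k2 * eT - k0 > 0 -> attracting_node k0 k1 km1 k2 eT (P0 k0 k1 km1 k2 eT)) /\
     (second_quadrant (P0 k0 k1 km1 k2 eT) <-> k2 * eT - k0 < 0) /\
     (k2 * eT - k0 < 0 -> saddle_point k0 k1 km1 k2 eT (P0 k0 k1 km1 k2 eT)).
Proof.
  intros A B C. assert (k1p : 0 < k1) by lra. assert (k2p : 0 < k2) by lra.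
  set (D := k2 * eT - k0) in *.
  unfold P0. fold D.
  set (ss := (km1 + k2) * k0 / (k1 * D)). set (cc := k0 / k2).
  assert (Ec : eT - cc = D / k2) by (unfold cc, D; field; auto).
  assert (Spos : D > 0 -> 0 <= ss).
  { intros HD. unfold ss. apply Rdiv_le_0_compat; [apply Rmult_le_pos; lra| apply Rmult_lt_0_compat; lra]. }
  assert (Sneg : D < 0 -> ss < 0 /\ 0 < cc).
  { intros HD. assert (0 < k0) by (unfold D in HD; nra).
    split.
    - unfold ss. unfold Rdiv. apply Rmult_lt_reg_r with (-(k1*D)); [nra|].
      rewrite Rmult_0_l. replace ((km1 + k2) * k0 * / (k1 * D) * - (k1 * D)) with (-((km1+k2)*k0)) by (field; split; auto).
      assert (0 < (km1+k2)*k0) by (apply Rmult_lt_0_compat; lra). lra.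
    - unfold cc. apply Rdiv_lt_0_compat; lra. }
  assert (Cpos : 0 <= cc) by (unfold cc; apply Rdiv_le_0_compat; lra).
  destruct (jac_vals k0 k1 km1 k2 eT ss cc) as (J1&J2&J3&J4).
  unfold attracting_node, saddle_point. rewrite J1, J2, J3, J4.
  set (AA := k1 * (eT - cc)).
  assert (EA : AA = k1 * D / k2) by (unfold AA; rewrite Ec; field; auto).
  assert (Det : (-AA) * (-(k1*ss) - (km1+k2)) - (k1*ss + km1) * AA = AA * k2) by ring.
  split; [|split; [|split]].
  - unfold first_quadrant; simpl. split.
    + intros [S1 _]. destruct (Rtotal_order D 0) as [L|[L|L]]; [|contradiction|lra].
      destruct (Sneg L). lra.
    + intros HD. split; auto.
  - intros HD. assert (0 < AA) by (rewrite EA; apply Rdiv_lt_0_compat; [apply Rmult_lt_0_compat|]; lra).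
    pose proof (Spos HD).
    apply node_lem.
    + assert (0 <= k1*ss) by (apply Rmult_le_pos; lra). lra.
    + rewrite Det. apply Rmult_lt_0_compat; lra.
    + rewrite Det. set (BBB := k1*ss + km1).
      assert (0 <= BBB) by (unfold BBB; assert (0 <= k1*ss) by (apply Rmult_le_pos; lra); lra).
      replace (-AA + (-(k1*ss) - (km1+k2))) with (-(AA + BBB + k2)) by (unfold BBB; ring).
      assert (0 <= (AA - k2)^2) by apply pow2_ge_0.
      assert (0 <= BBB * (AA + k2)) by (apply Rmult_le_pos; lra).
      assert (0 <= BBB^2) by apply pow2_ge_0.
      replace ((- (AA + BBB + k2)) ^ 2 - 4 * (AA * k2)) with ((AA - k2)^2 + BBB^2 + 2 * (BBB * (AA + k2))) by ring.
      lra.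
  - unfold second_quadrant; simpl. split.
    + intros [S1 _]. destruct (Rtotal_order D 0) as [L|[L|L]]; [lra|contradiction|].
      pose proof (Spos L). lra.
    + intros HD. apply Sneg; auto.
  - intros HD. apply saddle_lem. rewrite Det.
    assert (AA < 0).
    { rewrite EA. unfold Rdiv. apply Rmult_lt_reg_r with k2; auto. rewrite Rmult_0_l.
      rewrite Rmult_assoc, Rinv_l by auto. rewrite Rmult_1_r. nra. }
    nra.
Qed.


Theorem lemma3p1 (k0 k1 km1 k2 eT : R)
  (h0 : 0 <= k0) (h1 : 0 <= k1) (hm1 : 0 <= km1) (h2 : 0 <= k2) (hT : 0 <= eT) :
  (* (a) *)
  (infinite_set (stationary k0 k1 km1 k2 eT) <->
     (k0 = 0 /\ k1 = 0) \/ (k0 = 0 /\ eT = 0) \/ (k0 = 0 /\ k2 = 0)) /\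
  (* (b) *)
  (~ infinite_set (stationary k0 k1 km1 k2 eT) ->
     ~ (exists p, stationary k0 k1 km1 k2 eT p) \/
     (exists! p, stationary k0 k1 km1 k2 eT p)) /\
  ((exists! p, stationary k0 k1 km1 k2 eT p) <->
     k1 <> 0 /\ k2 <> 0 /\ k2 * eT - k0 <> 0) /\
  (k1 <> 0 -> k2 <> 0 -> k2 * eT - k0 <> 0 ->
     stationary k0 k1 km1 k2 eT (P0 k0 k1 km1 k2 eT) /\
     (first_quadrant (P0 k0 k1 km1 k2 eT) <-> k2 * eT - k0 > 0) /\
     (k2 * eT - k0 > 0 -> attracting_node k0 k1 km1 k2 eT (P0 k0 k1 km1 k2 eT)) /\
     (second_quadrant (P0 k0 k1 km1 k2 eT) <-> k2 * eT - k0 < 0) /\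
     (k2 * eT - k0 < 0 -> saddle_point k0 k1 km1 k2 eT (P0 k0 k1 km1 k2 eT))) /\
  (* (c) *)
  positively_invariant k0 k1 km1 k2 eT first_quadrant /\
  (forall s0 c0, first_quadrant (s0, c0) ->
     exists s c : R -> R, s 0 = s0 /\ c 0 = c0 /\
       is_solution_on k0 k1 km1 k2 eT s c (fun t => 0 <= t)) /\
  (0 < km1 + k2 ->
     positively_invariant k0 k1 km1 k2 eT (fun p => first_quadrant p /\ snd p <= eT)) /\
  (0 < km1 + k2 -> 0 < eT ->
     forall s c : R -> R, is_solution_on k0 k1 km1 k2 eT s c (fun t => 0 <= t) ->
       first_quadrant (s 0, c 0) -> exists t, 0 < t /\ c t <= eT) /\
  (* (d) no nonconstant closed trajectory (periodic solution) *)
  (forall (s c : R -> R) (T : R),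
     is_solution_on k0 k1 km1 k2 eT s c (fun _ => True) -> 0 < T ->
     (forall t, s (t + T) = s t /\ c (t + T) = c t) ->
     forall t, s t = s 0 /\ c t = c 0).
Proof.
  assert (Inf : infinite_set (stationary k0 k1 km1 k2 eT) <->
     (k0 = 0 /\ k1 = 0) \/ (k0 = 0 /\ eT = 0) \/ (k0 = 0 /\ k2 = 0)).
  { split.
    - intros H. apply NNPP. intro Hn. apply H.
      exists (cons (P0 k0 k1 km1 k2 eT) nil). intros p Hp.
      destruct (stat_unique k0 k1 km1 k2 eT h0 h1 hm1 h2 p Hn Hp) as (_&_&_&->). left; auto.
    - apply conds_infinite; auto. }
  split; [exact Inf|].
  split.
  { intros Hfin. assert (Hn : ~ ((k0 = 0 /\ k1 = 0) \/ (k0 = 0 /\ eT = 0) \/ (k0 = 0 /\ k2 = 0)))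
      by (intro; apply Hfin; apply Inf; auto).
    destruct (classic (exists p, stationary k0 k1 km1 k2 eT p)) as [[p Hp]|N]; [right|left; auto].
    exists p. split; auto. intros q Hq.
    destruct (stat_unique k0 k1 km1 k2 eT h0 h1 hm1 h2 p Hn Hp) as (_&_&_&E1).
    destruct (stat_unique k0 k1 km1 k2 eT h0 h1 hm1 h2 q Hn Hq) as (_&_&_&E2). congruence. }
  split.
  { split.
    - intros [p [Hp Hu]].
      assert (Hn : ~ ((k0 = 0 /\ k1 = 0) \/ (k0 = 0 /\ eT = 0) \/ (k0 = 0 /\ k2 = 0))).
      { intro Cd. pose proof (Hu _ (fam k0 k1 km1 k2 eT 1 h1 hm1 ltac:(lra) Cd)) as U1.
        pose proof (Hu _ (fam k0 k1 km1 k2 eT 2 h1 hm1 ltac:(lra) Cd)) as U2.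
        rewrite U1 in U2. inversion U2. lra. }
      destruct (stat_unique k0 k1 km1 k2 eT h0 h1 hm1 h2 p Hn Hp) as (A&B&C&_). auto.
    - intros (A&B&C). exists (P0 k0 k1 km1 k2 eT). split; [apply P0_stat; auto|].
      intros q Hq.
      assert (Hn : ~ ((k0 = 0 /\ k1 = 0) \/ (k0 = 0 /\ eT = 0) \/ (k0 = 0 /\ k2 = 0))).
      { intros [[? ?]|[[? ?]|[? ?]]]; subst; try contradiction. apply C. ring. }
      destruct (stat_unique k0 k1 km1 k2 eT h0 h1 hm1 h2 q Hn Hq) as (_&_&_&E). auto. }
  split.
  { intros A B C. split; [apply P0_stat; auto|]. apply P0_props; auto. }
  split; [apply inv_fq; auto|].
  split; [apply existence; auto|].
  split; [intros; apply inv_fq2; auto|].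
  split; [apply eventually_le; auto|].
  apply no_periodic; auto.
Qed.
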